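(* Let $\vec s:[0,1]\to\mathbb{R}^2$ and $\mathbf{\Gamma}=\operatorname{range}(\vec s)$ be as defined in the context. Then $\mathbf{\Gamma}$ is a simple curve from $\vec s(0)=(0,0)$ to $\vec s(1)=\left(0,\frac{5^3(e-1)^3}{6^3\cdot 8\pi(e^3-1)}\right)$.
   Context: Construction. For reals $a<b$ define $\varphi_{a,b}:[a,b]\to\mathbb{R}$ by $\varphi_{a,b}(t)=\frac{b-a}{4}\sin\frac{2\pi(t-a)}{b-a}$, and $\xi_{a,b}:[a,b]\to\mathbb{R}$ by $\xi_{a,b}(t)=-\varphi_{a,\frac{a+b}{2}}(t)$ for $a\le t\le\frac{a+b}{2}$ and $\xi_{a,b}(t)=\varphi_{\frac{a+b}{2},b}(t)$ for $\frac{a+b}{2}\le t\le b$. For $a<b$ and a positive integer $n$, let $d_i=\frac{a+5b}{6}+i\frac{b-a}{6n}$ for $0\le i\le n$, and define $\psi_{a,b,n}:[a,b]\to\mathbb{R}$ by $\psi_{a,b,n}(t)=\varphi_{a,d_0}(t)$ for $a\le t\le d_0$ and $\psi_{a,b,n}(t)=\xi_{d_{i-1},d_i}(t)$ for $d_{i-1}\le t\le d_i$, $1\le i\le n$. Fix a standard enumeration $M_1,M_2,\dots$ of deterministic Turing machines taking positive integer inputs, and let $\tau(n)\in\mathbb{N}\cup\{\infty\}$ be the number of steps executed by $M_n$ on input $n$ ($\infty$ if it does not halt). For $n\in\mathbb{N}$ let $t_n=1-e^{-n}$, and for $n\ge1$ let $t_n^-=\frac{t_{n-1}+4t_n}{5}$,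 $t_n^+=\frac{6t_n-t_{n-1}}{5}$. Define $a_x:[0,1]\to\mathbb{R}$ by $a_x(t)=-2^{-(n+\tau(n))}\xi_{t_n^-,t_n^+}(t)$ if $t_n^-\le t<t_n^+$ for some $n\ge1$, and $a_x(t)=0$ if no such $n$ exists, with the convention $2^{-\infty}=0$. Define $a_y:[0,1]\to\mathbb{R}$ by $a_y(t)=\psi_{t_{n-1},t_n,n}(t)$ where $n$ is the unique positive integer with $t_{n-1}\le t<t_n$ (for $0\le t<1$), and $a_y(1)=0$. Let $v_x(t)=\int_0^t a_x$, $v_y(t)=\int_0^t a_y$, $s_x(t)=\int_0^t v_x$, $s_y(t)=\int_0^t v_y$, and $\vec s=(s_x,s_y)$; $\mathbf{\Gamma}=\operatorname{range}(\vec s)$. A curve is simple if it is the range of a one-to-one continuous map from a compact interval. *)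

(* Defs.v *)
From Stdlib Require Import Reals ClassicalEpsilon.
From Coquelicot Require Import Coquelicot.
Open Scope R_scope.

Definition phi (a b t : R) : R := (b - a) / 4 * sin (2 * PI * (t - a) / (b - a)).

(* xi_{a,b}: -phi_{a,(a+b)/2} on the first half, phi_{(a+b)/2,b} on the second
   (both pieces vanish at the midpoint, so the overlap is consistent). *)
Definition xi (a b t : R) : R :=
  if Rle_dec t ((a + b) / 2) then - phi a ((a + b) / 2) t
  else phi ((a + b) / 2) b t.

Definition dpt (a b : R) (n i : nat) : R :=
  (a + 5 * b) / 6 + INR i * (b - a) / (6 * INR n).

(* psi_{a,b,n}: phi_{a,d_0} on [a,d_0], xi_{d_{i-1},d_i} on [d_{i-1},d_i].
   Adjacent pieces agree (value 0) at the shared endpoints, so choosing any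
   admissible i is well defined. *)
Definition psi (a b : R) (n : nat) (t : R) : R :=
  if Rle_dec t (dpt a b n 0) then phi a (dpt a b n 0) t
  else match excluded_middle_informative
         (exists i : nat, (1 <= i <= n)%nat /\
            dpt a b n (i - 1) <= t <= dpt a b n i) with
       | left H =>
           let i := proj1_sig (constructive_indefinite_description _ H) in
           xi (dpt a b n (i - 1)) (dpt a b n i) t
       | right _ => 0
       end.

Definition tn (n : nat) : R := 1 - exp (- INR n).
Definition tminus (n : nat) : R := (tn (n - 1) + 4 * tn n) / 5.
Definition tplus (n : nat) : R := (6 * tn n - tn (n - 1)) / 5.

(* 2^{-(n + tau n)}, with 2^{-oo} = 0; tau n = None encodes "M_n does not halt
   on input n" (tau n = infinity). *)
Definition coef (tau : nat -> option nat) (n : nat) : R :=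
  match tau n with
  | Some k => / (2 ^ (n + k))
  | None => 0
  end.

(* a_x : the intervals [t_n^-, t_n^+) are pairwise disjoint, so n is unique. *)
Definition a_x (tau : nat -> option nat) (t : R) : R :=
  match excluded_middle_informative
      (exists n : nat, (1 <= n)%nat /\ tminus n <= t < tplus n) with
  | left H =>
      let n := proj1_sig (constructive_indefinite_description _ H) in
      - coef tau n * xi (tminus n) (tplus n) t
  | right _ => 0
  end.

(* a_y(t) = psi_{t_{n-1},t_n,n}(t) for the unique n >= 1 with t_{n-1} <= t < t_n
   (0 <= t < 1); a_y(1) = 0 (and 0 outside [0,1), never used). *)
Definition a_y (t : R) : R :=
  match excluded_middle_informative
      (exists n : nat, (1 <= n)%nat /\ tn (n - 1) <= t < tn n) with
  | left H =>
      let n := proj1_sig (constructive_indefinite_description _ H) in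
      psi (tn (n - 1)) (tn n) n t
  | right _ => 0
  end.

Definition v_x (tau : nat -> option nat) (t : R) : R := RInt (a_x tau) 0 t.
Definition v_y (t : R) : R := RInt a_y 0 t.
Definition s_x (tau : nat -> option nat) (t : R) : R := RInt (v_x tau) 0 t.
Definition s_y (t : R) : R := RInt v_y 0 t.

Definition s_vec (tau : nat -> option nat) (t : R) : R * R := (s_x tau t, s_y t).

Definition Gamma (tau : nat -> option nat) (p : R * R) : Prop :=
  exists t, 0 <= t <= 1 /\ s_vec tau t = p.

Definition continuous_on_Icc (c d : R) (g : R -> R * R) : Prop :=
  forall x, c <= x <= d ->
    filterlim g (within (fun y => c <= y <= d) (locally x)) (locally (g x)).

Definition simple_curve_from_to (S : R * R -> Prop) (p q : R * R) : Prop :=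
  exists (c d : R) (g : R -> R * R),
    c <= d /\
    continuous_on_Icc c d g /\
    (forall x y, c <= x <= d -> c <= y <= d -> g x = g y -> x = y) /\
    (forall z, S z <-> exists u, c <= u <= d /\ g u = z) /\
    g c = p /\ g d = q.

(* Main.v *)
Require Import Defs.
From Stdlib Require Import Reals Lra Lia ClassicalEpsilon.
From Coquelicot Require Import Coquelicot.
Open Scope R_scope.

Definition Fb (a b t : R) : R := (b-a)^2/(8*PI) * (1 - cos (2*PI*(t-a)/(b-a))).
Definition Gb (a b t : R) : R :=
  (b-a)^2/(8*PI) * ((t-a) - (b-a)/(2*PI) * sin (2*PI*(t-a)/(b-a))).

Lemma PI_ge3 : 3 <= PI.
Proof. generalize PI2_3_2; lra. Qed.

Lemma phi_deriv a b t : a < b -> is_derive (Fb a b) t (phi a b t).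
Proof.
  intros H. unfold Fb, phi. auto_derive; [auto|].
  assert (PI > 0) by apply PI_RGT_0. unfold Rminus, Rdiv. field; lra.
Qed.

Lemma Fb_deriv a b t : a < b -> is_derive (Gb a b) t (Fb a b t).
Proof.
  intros H. unfold Fb, Gb. auto_derive; [auto|].
  assert (PI > 0) by apply PI_RGT_0. unfold Rminus, Rdiv. field; lra.
Qed.

Lemma phi_cont a b t : continuous (phi a b) t.
Proof.
  unfold phi. apply continuity_pt_filterlim.
  apply continuity_pt_mult. apply continuity_pt_const; intros ??; reflexivity.
  apply (continuity_pt_comp (fun t => 2 * PI * (t - a) / (b - a)) sin).
  2: apply continuity_sin.
  unfold Rdiv. apply continuity_pt_mult. apply continuity_pt_mult.
  apply continuity_pt_const; intros ??; reflexivity.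
  apply continuity_pt_minus. apply derivable_continuous_pt, derivable_pt_id.
  apply continuity_pt_const; intros ??; reflexivity.
  apply continuity_pt_const; intros ??; reflexivity.
Qed.

Lemma Fb_cont a b t : a < b -> continuous (Fb a b) t.
Proof. intros H. apply (ex_derive_continuous (Fb a b)). eexists. apply phi_deriv; auto. Qed.

Lemma Gb_cont a b t : a < b -> continuous (Gb a b) t.
Proof. intros H. apply (ex_derive_continuous (Gb a b)). eexists. apply Fb_deriv; auto. Qed.

Lemma ang_a a b : a < b -> 2*PI*(a-a)/(b-a) = 0.
Proof. intros; field; lra. Qed.
Lemma ang_b a b : a < b -> 2*PI*(b-a)/(b-a) = 2*PI.
Proof. intros; field; lra. Qed.

Lemma phi_a a b : a < b -> phi a b a = 0.
Proof. intros H; unfold phi; rewrite ang_a, sin_0 by auto; ring. Qed.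
Lemma phi_b a b : a < b -> phi a b b = 0.
Proof. intros H; unfold phi; rewrite ang_b, sin_2PI by auto; ring. Qed.
Lemma Fb_a a b : a < b -> Fb a b a = 0.
Proof. intros H; unfold Fb; rewrite ang_a, cos_0 by auto; ring. Qed.
Lemma Fb_b a b : a < b -> Fb a b b = 0.
Proof. intros H; unfold Fb; rewrite ang_b, cos_2PI by auto; ring. Qed.
Lemma Gb_a a b : a < b -> Gb a b a = 0.
Proof. intros H; unfold Gb; rewrite ang_a, sin_0 by auto; ring. Qed.
Lemma Gb_b a b : a < b -> Gb a b b = (b-a)^3/(8*PI).
Proof. intros H; unfold Gb; rewrite ang_b, sin_2PI by auto.
  assert (PI > 0) by apply PI_RGT_0. field; lra. Qed.

Lemma phi_bound a b t : a < b -> Rabs (phi a b t) <= (b-a)/4.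
Proof.
  intros H; unfold phi. rewrite Rabs_mult, Rabs_right by lra.
  assert (Rabs (sin (2 * PI * (t - a) / (b - a))) <= 1).
  { apply Rabs_le, SIN_bound. }
  assert (0 <= (b-a)/4) by lra. nra.
Qed.

Lemma Fb_nonneg a b t : a < b -> 0 <= Fb a b t.
Proof.
  intros H; unfold Fb. assert (PI > 0) by apply PI_RGT_0.
  apply Rmult_le_pos. apply Rmult_le_pos. apply pow2_ge_0.
  apply Rlt_le, Rinv_0_lt_compat; lra.
  generalize (COS_bound (2 * PI * (t - a) / (b - a))); lra.
Qed.

Lemma Fb_bound a b t : a < b -> Fb a b t <= (b-a)^2/(4*PI).
Proof.
  intros H; unfold Fb. assert (PI > 0) by apply PI_RGT_0.
  generalize (COS_bound (2 * PI * (t - a) / (b - a))); intros.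
  assert (0 <= (b-a)^2/(8*PI)).
  { apply Rmult_le_pos. apply pow2_ge_0. apply Rlt_le, Rinv_0_lt_compat; lra. }
  replace ((b-a)^2/(4*PI)) with ((b-a)^2/(8*PI) * 2) by (field; lra). nra.
Qed.

Lemma sin_abs_lt z : 0 < z -> Rabs (sin z) < z.
Proof.
  intros Hz. apply Rabs_def1. apply sin_lt_x; auto.
  destruct (Rle_lt_dec z 1).
  - assert (0 < sin z). apply sin_gt_0; generalize PI_ge3; lra. lra.
  - generalize (SIN_bound z); lra.
Qed.

Lemma sin_diff_lt A B : A < B -> sin B - sin A < B - A.
Proof.
  intros H. rewrite form4.
  set (z := (B - A)/2). set (c := cos ((B + A)/2)).
  assert (0 < z) by (unfold z; lra).
  generalize (sin_abs_lt z H0). intros H1.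
  assert (Rabs (c * sin z) <= Rabs (sin z)).
  { rewrite Rabs_mult. assert (Rabs c <= 1) by (apply Rabs_le, COS_bound).
    generalize (Rabs_pos (sin z)); nra. }
  generalize (Rle_abs (c * sin z)). replace (B - A) with (2 * z) by (unfold z; field).
  lra.
Qed.

Lemma Gb_incr a b s t : a < b -> s < t -> Gb a b s < Gb a b t.
Proof.
  intros H Hst. unfold Gb. assert (PI > 0) by apply PI_RGT_0.
  set (A := 2 * PI * (s - a) / (b - a)). set (B := 2 * PI * (t - a) / (b - a)).
  assert (A < B). { unfold A, B. unfold Rdiv. apply Rmult_lt_compat_r.
    apply Rinv_0_lt_compat; lra. nra. }
  generalize (sin_diff_lt A B H1); intros.
  assert (B - A = 2*PI*(t-s)/(b-a)) by (unfold A, B; field; lra).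
  assert (0 < (b-a)^2/(8*PI)).
  { apply Rmult_lt_0_compat. apply pow2_gt_0; lra. apply Rinv_0_lt_compat; lra. }
  apply Rmult_lt_compat_l; auto.
  assert ((b-a)/(2*PI) * (sin B - sin A) < (b-a)/(2*PI) * (B - A)).
  { apply Rmult_lt_compat_l; auto. apply Rdiv_lt_0_compat; lra. }
  rewrite H3 in H5. replace ((b - a) / (2 * PI) * (2 * PI * (t - s) / (b - a))) with (t - s) in H5 by (field; lra).
  lra.
Qed.

Definition E (n : nat) : R := exp (- INR n).

Lemma e_bounds : 2 < exp 1 <= 3.
Proof. split. generalize (exp_ineq1 1); intros H; lra. apply exp_le_3. Qed.

Lemma E_pos n : 0 < E n.
Proof. apply exp_pos. Qed.
Lemma E_0 : E 0 = 1.
Proof. unfold E; simpl. rewrite Ropp_0, exp_0; auto. Qed.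
Lemma E_S n : E (S n) = E n / exp 1.
Proof. unfold E. rewrite S_INR. replace (- (INR n + 1)) with (- INR n + - (1)) by ring.
  rewrite exp_plus, (exp_Ropp 1). reflexivity. Qed.
Lemma tn_E n : tn n = 1 - E n.
Proof. reflexivity. Qed.

Lemma E_decr n : E (S n) < E n.
Proof. rewrite E_S. generalize (E_pos n) e_bounds; intros.
  apply Rmult_lt_reg_r with (exp 1). lra. unfold Rdiv. rewrite Rmult_assoc, Rinv_l by lra. nra. Qed.

Lemma E_mono n k : (n <= k)%nat -> E k <= E n.
Proof. induction 1. lra. generalize (E_decr m); lra. Qed.
Lemma E_smono n k : (n < k)%nat -> E k < E n.
Proof. intros H. apply Nat.le_succ_l in H. generalize (E_mono _ _ H) (E_decr n). lra. Qed.

Lemma tn_mono n k : (n <= k)%nat -> tn n <= tn k.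
Proof. intros H. rewrite !tn_E. generalize (E_mono _ _ H); lra. Qed.
Lemma tn_smono n k : (n < k)%nat -> tn n < tn k.
Proof. intros H. rewrite !tn_E. generalize (E_smono _ _ H); lra. Qed.
Lemma tn_lt1 n : tn n < 1.
Proof. rewrite tn_E. generalize (E_pos n); lra. Qed.
Lemma tn_0 : tn 0 = 0.
Proof. rewrite tn_E, E_0. ring. Qed.
Lemma tn_ge0 n : 0 <= tn n.
Proof. rewrite <- tn_0. apply tn_mono. lia. Qed.

Lemma E_small eps : 0 < eps -> exists n, E n < eps.
Proof.
  intros He. destruct (archimed_cor1 eps He) as [n [Hn Hn0]].
  exists n. apply Rle_lt_trans with (/ INR n); auto.
  assert (0 < INR n) by (apply lt_0_INR; auto).
  unfold E. rewrite exp_Ropp. apply Rinv_le_contravar; auto.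
  destruct (Req_dec (INR n) 0). lra. generalize (exp_ineq1 (INR n) H0). lra.
Qed.

Definition Lb (m : nat) : R := tn (S m) - tn m.
Lemma Lb_E m : Lb m = E m * (1 - / exp 1).
Proof. unfold Lb. rewrite !tn_E, E_S. unfold Rdiv. ring. Qed.
Lemma Lb_pos m : 0 < Lb m.
Proof. unfold Lb. apply Rlt_Rminus, tn_smono; lia. Qed.
Lemma Lb_S m : Lb (S m) = Lb m / exp 1.
Proof. rewrite !Lb_E, E_S. unfold Rdiv; ring. Qed.

Lemma tminus_S m : tminus (S m) = tn m + 4/5 * Lb m.
Proof. unfold tminus, Lb. replace (S m - 1)%nat with m by lia. field. Qed.
Lemma tplus_S m : tplus (S m) = tn (S m) + Lb m / 5.
Proof. unfold tplus, Lb. replace (S m - 1)%nat with m by lia. field. Qed.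
Lemma tplus_0 : tplus 0 = 0.
Proof. unfold tplus. simpl. rewrite tn_0. field. Qed.
Lemma tmid_S m : (tminus (S m) + tplus (S m)) / 2 = tn (S m).
Proof. rewrite tminus_S, tplus_S. unfold Lb. field. Qed.
Lemma d0_S m : dpt (tn m) (tn (S m)) (S m) 0 = tn m + 5/6 * Lb m.
Proof. unfold dpt, Lb. simpl (INR 0). rewrite S_INR. field.
  generalize (pos_INR m); lra. Qed.

Lemma ineq_win m : tplus (S m) < tminus (S (S m)).
Proof. rewrite tplus_S, tminus_S, Lb_S. generalize (Lb_pos m) e_bounds; intros.
  cut (Lb m / 5 < 4/5 * (Lb m / exp 1)). lra.
  unfold Rdiv. apply Rmult_lt_reg_r with (exp 1). lra.
  replace (4 * / 5 * (Lb m * / exp 1) * exp 1) with (4/5 * Lb m) by (field; lra). nra. Qed.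

Lemma ineq_win_d0 m : tplus (S m) < tn (S m) + 5/6 * Lb (S m).
Proof. rewrite tplus_S, Lb_S. generalize (Lb_pos m) e_bounds; intros.
  cut (Lb m / 5 < 5/6 * (Lb m / exp 1)). lra.
  unfold Rdiv. apply Rmult_lt_reg_r with (exp 1). lra.
  replace (5 * / 6 * (Lb m * / exp 1) * exp 1) with (5/6 * Lb m) by (field; lra). nra. Qed.

Lemma ineq_prev m : tn m <= tplus m <= tn m + 3/5 * Lb m.
Proof. destruct m as [|k].
  - rewrite tplus_0, tn_0. generalize (Lb_pos 0); lra.
  - rewrite tplus_S, Lb_S. generalize (Lb_pos k) e_bounds; intros. split. lra.
    cut (Lb k / 5 <= 3/5 * (Lb k / exp 1)). lra.
    unfold Rdiv. apply Rmult_le_reg_r with (exp 1). lra.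
    replace (3 * / 5 * (Lb k * / exp 1) * exp 1) with (3/5 * Lb k) by (field; lra). nra. Qed.

Ltac dem H := match goal with |- context [excluded_middle_informative ?P] =>
  destruct (excluded_middle_informative P) as [H|H] end.

Lemma xi_l p q t : p < q -> p <= t <= (p+q)/2 -> xi p q t = - phi p ((p+q)/2) t.
Proof. intros H Ht. unfold xi. destruct (Rle_dec t ((p+q)/2)); [reflexivity|lra]. Qed.
Lemma xi_r p q t : p < q -> (p+q)/2 <= t <= q -> xi p q t = phi ((p+q)/2) q t.
Proof. intros H Ht. unfold xi. destruct (Rle_dec t ((p+q)/2)); [|reflexivity].
  assert (t = (p+q)/2) by lra. subst t. rewrite phi_b, phi_a by lra. ring. Qed.
Lemma xi_p p q : p < q -> xi p q p = 0.
Proof. intros H. rewrite xi_l by lra. rewrite phi_a by lra. ring. Qed.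
Lemma xi_q p q : p < q -> xi p q q = 0.
Proof. intros H. rewrite xi_r by lra. rewrite phi_b by lra. ring. Qed.

Lemma INR_pos n : (1 <= n)%nat -> 0 < INR n.
Proof. intros; apply lt_0_INR; lia. Qed.

Lemma dpt_S a b n i : (1 <= n)%nat -> dpt a b n (S i) = dpt a b n i + (b-a)/(6*INR n).
Proof. intros Hn. unfold dpt. rewrite S_INR. generalize (INR_pos n Hn); intros. field; lra. Qed.

Lemma dpt_mono a b n i j : a < b -> (1 <= n)%nat -> (i <= j)%nat -> dpt a b n i <= dpt a b n j.
Proof. intros Hab Hn Hij. unfold dpt. generalize (INR_pos n Hn); intros.
  apply le_INR in Hij. apply Rplus_le_compat_l. unfold Rdiv.
  apply Rmult_le_compat_r. apply Rlt_le, Rinv_0_lt_compat; lra.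
  apply Rmult_le_compat_r; lra. Qed.
Lemma dpt_smono a b n i j : a < b -> (1 <= n)%nat -> (i < j)%nat -> dpt a b n i < dpt a b n j.
Proof. intros Hab Hn Hij. unfold dpt. generalize (INR_pos n Hn); intros.
  apply lt_INR in Hij. apply Rplus_lt_compat_l. unfold Rdiv.
  apply Rmult_lt_compat_r. apply Rinv_0_lt_compat; lra.
  apply Rmult_lt_compat_r; lra. Qed.
Lemma dpt_n a b n : (1 <= n)%nat -> dpt a b n n = b.
Proof. intros Hn. unfold dpt. generalize (INR_pos n Hn); intros. field; lra. Qed.
Lemma dpt_0 a b n : dpt a b n 0 = a + 5/6*(b-a).
Proof. unfold dpt. simpl. unfold Rdiv. rewrite !Rmult_0_l. field. Qed.

Lemma psi_phi a b n t : t <= dpt a b n 0 -> psi a b n t = phi a (dpt a b n 0) t.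
Proof. intros H. unfold psi. destruct (Rle_dec t (dpt a b n 0)); [reflexivity|lra]. Qed.

Lemma psi_xi a b n i t : a < b -> (1 <= i <= n)%nat ->
  dpt a b n (i-1) <= t <= dpt a b n i ->
  psi a b n t = xi (dpt a b n (i-1)) (dpt a b n i) t.
Proof.
  intros Hab Hi Ht.
  assert (Hn : (1 <= n)%nat) by lia.
  assert (Hlt : forall k, (1 <= k)%nat -> dpt a b n (k-1) < dpt a b n k)
    by (intros k Hk; apply dpt_smono; auto; lia).
  unfold psi. destruct (Rle_dec t (dpt a b n 0)) as [Hl|Hl].
  - assert (i = 1)%nat.
    { destruct (Nat.eq_dec i 1); auto.
      assert (dpt a b n 0 < dpt a b n (i-1)) by (apply dpt_smono; auto; lia). lra. }
    subst i. simpl (1-1)%nat in *. assert (t = dpt a b n 0) by lra. subst t.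
    assert (a < dpt a b n 0) by (rewrite dpt_0; lra).
    assert (dpt a b n 0 < dpt a b n 1) by (apply dpt_smono; auto).
    rewrite phi_b, xi_p; auto.
  - dem H.
    + destruct (constructive_indefinite_description _ H) as [j [Hj Hjt]]. simpl.
      destruct (Compare_dec.lt_eq_lt_dec i j) as [[Hij|Hij]|Hij].
      * assert (dpt a b n i <= dpt a b n (j-1)) by (apply dpt_mono; auto; lia).
        assert (t = dpt a b n i) by lra.
        assert (t = dpt a b n (j-1)) by lra.
        rewrite H2 at 1. rewrite H1. rewrite xi_p, xi_q; auto. apply Hlt; lia. apply Hlt; lia.
      * subst; reflexivity.
      * assert (dpt a b n j <= dpt a b n (i-1)) by (apply dpt_mono; auto; lia).
        assert (t = dpt a b n j) by lra.
        assert (t = dpt a b n (i-1)) by lra.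
        rewrite H1 at 1. rewrite H2. rewrite xi_p, xi_q; auto. apply Hlt; lia. apply Hlt; lia.
    + exfalso. apply H. exists i. split; auto.
Qed.

Lemma ay_eq m t : tn m <= t < tn (S m) -> a_y t = psi (tn m) (tn (S m)) (S m) t.
Proof.
  intros Ht. unfold a_y. dem H.
  - destruct (constructive_indefinite_description _ H) as [k [Hk Hkt]]. simpl.
    assert (k = S m).
    { destruct (Compare_dec.lt_eq_lt_dec k (S m)) as [[Hlt|Heq]|Hgt]; auto.
      - assert (tn k <= tn m) by (apply tn_mono; lia). lra.
      - assert (tn (S m) <= tn (k-1)) by (apply tn_mono; lia). lra. }
    subst k. replace (S m - 1)%nat with m in * by lia. reflexivity.
  - exfalso. apply H. exists (S m). replace (S m - 1)%nat with m by lia. split; [lia|auto].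
Qed.

Lemma ay_out t : t < 0 \/ 1 <= t -> a_y t = 0.
Proof.
  intros Ht. unfold a_y. dem H; auto.
  exfalso. destruct H as [k [Hk Hkt]]. generalize (tn_ge0 (k-1)) (tn_lt1 k). lra.
Qed.

Section Block.
Variable m : nat.
Let A := tn m.
Let B := tn (S m).
Let N := S m.
Let d := dpt A B N.
Lemma AB : A < B.
Proof. apply tn_smono; lia. Qed.
Lemma d_lt i : (1 <= i)%nat -> d (i-1) < d i.
Proof. intros; apply dpt_smono; [apply AB|unfold N; lia|lia]. Qed.
Lemma d_mono i j : (i <= j)%nat -> d i <= d j.
Proof. intros; apply dpt_mono; [apply AB|unfold N; lia|lia]. Qed.
Lemma d_N : d N = B.
Proof. apply dpt_n; unfold N; lia. Qed.
Lemma d_0 : d 0 = A + 5/6*(B-A).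
Proof. apply dpt_0. Qed.

Lemma ay_phi t : A <= t <= d 0 -> a_y t = phi A (d 0) t.
Proof. intros Ht. generalize AB; intro. rewrite d_0 in Ht. rewrite ay_eq with m t.
  apply psi_phi. fold A B N d. rewrite d_0; lra. fold A B. lra. Qed.

Lemma ay_xl i t : (1 <= i <= N)%nat -> d (i-1) <= t <= (d (i-1) + d i)/2 ->
  a_y t = - phi (d (i-1)) ((d (i-1) + d i)/2) t.
Proof. intros Hi Ht. generalize (d_lt i (proj1 Hi)) (d_mono (i-1) 0) (d_mono 0 (i-1)) (d_mono i N) d_N; intros.
  rewrite ay_eq with m t. fold A B N. rewrite psi_xi with (i := i); auto. fold d. apply xi_l; lra.
  apply AB. fold A B N d. lra. fold A B. split. generalize d_0 AB; intros.
  assert (A <= d (i-1)). { destruct (Nat.eq_dec i 1). subst i. simpl. lra. assert (d 0 <= d (i-1)) by (apply d_mono; lia). lra. }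
  lra. assert (d i <= d N) by (apply d_mono; lia). lra. Qed.

Lemma ay_xr i t : (1 <= i <= N)%nat -> (d (i-1) + d i)/2 <= t <= d i ->
  a_y t = phi ((d (i-1) + d i)/2) (d i) t.
Proof. intros Hi Ht. generalize (d_lt i (proj1 Hi)) d_N d_0 AB; intros.
  assert (A <= d (i-1)). { destruct (Nat.eq_dec i 1). subst i. simpl. lra. assert (d 0 <= d (i-1)) by (apply d_mono; lia). lra. }
  assert (d i <= B) by (rewrite <- d_N; apply d_mono; lia).
  destruct (Rlt_le_dec t B).
  - rewrite ay_eq with m t. fold A B N. rewrite psi_xi with (i := i); auto. fold d. apply xi_r; lra.
    fold A B N d. lra. fold A B. lra.
  - assert (t = B) by lra. assert (d i = B) by lra. subst t. rewrite H6.
    rewrite phi_b by lra.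
    assert (Hb: tn (S m) < tn (S (S m))) by (apply tn_smono; lia).
    rewrite (ay_eq (S m) B) by (unfold B; lra).
    rewrite psi_phi by (rewrite dpt_0; unfold B; lra).
    apply phi_a. rewrite dpt_0; unfold B; lra.
Qed.
End Block.

Lemma tminus_E a : tminus (S a) = 1 - E a * (1/5 + 4/(5*exp 1)).
Proof. rewrite tminus_S, Lb_E, tn_E. generalize e_bounds; intros. field. lra. Qed.
Lemma tplus_E a : tplus (S a) = 1 - E a * (6/(5*exp 1) - 1/5).
Proof. rewrite tplus_S, Lb_E, tn_E, E_S. generalize e_bounds; intros. field. lra. Qed.

Lemma coefs_pos : 0 < 1/5 + 4/(5*exp 1) /\ 0 < 6/(5*exp 1) - 1/5.
Proof. generalize e_bounds; intros. split.
  assert (0 < 4/(5*exp 1)) by (apply Rdiv_lt_0_compat; lra). lra.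
  assert (1/5 < 6/(5*exp 1)). { apply Rmult_lt_reg_r with (5*exp 1). lra.
  replace (6 / (5 * exp 1) * (5 * exp 1)) with 6 by (field; lra). lra. } lra. Qed.

Lemma tminus_mono a b : (a <= b)%nat -> tminus (S a) <= tminus (S b).
Proof. intros. rewrite !tminus_E. generalize (E_mono _ _ H) coefs_pos; intros. nra. Qed.
Lemma tplus_mono a b : (a <= b)%nat -> tplus (S a) <= tplus (S b).
Proof. intros. rewrite !tplus_E. generalize (E_mono _ _ H) coefs_pos; intros. nra. Qed.
Lemma tplus_lt1 a : tplus (S a) < 1.
Proof. rewrite tplus_E. generalize (E_pos a) coefs_pos; intros. nra. Qed.
Lemma win_lt a : tminus (S a) < tn (S a) < tplus (S a).
Proof. rewrite tminus_S, tplus_S. generalize (Lb_pos a). unfold Lb. lra. Qed.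

Lemma win_disj a b : (a < b)%nat -> tplus (S a) <= tminus (S b).
Proof. intros. generalize (ineq_win a) (tminus_mono (S a) b ltac:(lia)). lra. Qed.


Lemma ax_eq tau a t : tminus (S a) <= t < tplus (S a) ->
  a_x tau t = - coef tau (S a) * xi (tminus (S a)) (tplus (S a)) t.
Proof.
  intros Ht. unfold a_x. dem H.
  - destruct (constructive_indefinite_description _ H) as [k [Hk Hkt]]. simpl.
    destruct k as [|b]; [lia|].
    assert (b = a).
    { destruct (Compare_dec.lt_eq_lt_dec b a) as [[Hlt|Heq]|Hgt]; auto.
      - generalize (win_disj b a Hlt); lra.
      - generalize (win_disj a b Hgt); lra. }
    subst; reflexivity.
  - exfalso. apply H. exists (S a). split; [lia|auto].
Qed.

Lemma ax_none tau t : (forall a, ~ (tminus (S a) <= t < tplus (S a))) -> a_x tau t = 0.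
Proof. intros Hn. unfold a_x. dem H; auto. exfalso. destruct H as [k [Hk Hkt]].
  destruct k as [|b]; [lia|]. apply (Hn b); auto. Qed.

Lemma ax_left tau a t : tminus (S a) <= t <= tn (S a) ->
  a_x tau t = coef tau (S a) * phi (tminus (S a)) (tn (S a)) t.
Proof. intros Ht. generalize (win_lt a); intros.
  rewrite (ax_eq tau a t) by lra. rewrite xi_l. rewrite tmid_S. ring. lra. rewrite tmid_S. lra. Qed.

Lemma ax_gap tau a t : tplus (S a) <= t <= tminus (S (S a)) -> a_x tau t = 0.
Proof. intros Ht. destruct (Req_dec t (tminus (S (S a)))).
  - subst t. generalize (win_lt (S a)); intros. rewrite (ax_eq tau (S a)) by lra. rewrite xi_p by lra. ring.
  - apply ax_none. intros b Hb. destruct (Nat.le_gt_cases b a).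
    + generalize (tplus_mono _ _ H0); lra.
    + generalize (tminus_mono (S a) b H0); lra.
Qed.

Lemma ax_init tau t : t <= tminus 1 -> a_x tau t = 0.
Proof. intros Ht. destruct (Req_dec t (tminus 1)).
  - subst t. generalize (win_lt 0); intros. rewrite (ax_eq tau 0) by lra. rewrite xi_p by lra. ring.
  - apply ax_none. intros b Hb. generalize (tminus_mono 0 b ltac:(lia)); lra.
Qed.

Lemma ax_right tau a t : tn (S a) <= t <= tplus (S a) ->
  a_x tau t = - coef tau (S a) * phi (tn (S a)) (tplus (S a)) t.
Proof. intros Ht. generalize (win_lt a); intros. destruct (Req_dec t (tplus (S a))).
  - subst t. rewrite phi_b by lra. rewrite (ax_gap tau a). ring. generalize (ineq_win a); lra.
  - rewrite (ax_eq tau a t) by lra. rewrite xi_r. rewrite tmid_S. ring. lra. rewrite tmid_S. lra. Qed.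

Lemma ax_ge1 tau t : 1 <= t -> a_x tau t = 0.
Proof. intros. apply ax_none. intros b Hb. generalize (tplus_lt1 b); lra. Qed.

Lemma coef_bounds tau n : 0 <= coef tau n <= 1.
Proof. unfold coef. destruct (tau n); [|lra].
  assert (1 <= 2 ^ (n + n0)) by (apply pow_R1_Rle; lra).
  split. apply Rlt_le, Rinv_0_lt_compat; lra.
  rewrite <- Rinv_1. apply Rinv_le_contravar; lra. Qed.

Lemma cont_eps (f : R -> R) (x : R) : continuous f x ->
  forall eps, 0 < eps -> exists del, 0 < del /\ forall t, Rabs (t - x) < del -> Rabs (f t - f x) < eps.
Proof. intros Hc eps He. apply continuity_pt_filterlim in Hc.
  apply (proj1 (continuity_pt_locally f x)) with (eps := mkposreal eps He) in Hc.
  destruct Hc as [del Hd]. exists del. split. apply cond_pos. intros t Ht. apply Hd. apply Ht. Qed.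

Lemma eps_cont (f : R -> R) (x : R) : (forall eps, 0 < eps -> exists del, 0 < del /\ forall t, Rabs (t - x) < del -> Rabs (f t - f x) < eps) ->
  continuous f x.
Proof. intros H. apply continuity_pt_filterlim. apply continuity_pt_locally. intros [eps He].
  destruct (H eps He) as [del [Hd H1]]. exists (mkposreal del Hd). intros t Ht. apply H1. apply Ht. Qed.

Lemma cont_scal c (f : R -> R) (x : R) : continuous f x -> continuous (fun t : R => c * f t) x.
Proof. intros Hc. apply eps_cont. intros eps He.
  destruct (cont_eps f x Hc (eps / (Rabs c + 1))) as [del [Hd H1]].
  apply Rdiv_lt_0_compat; auto. generalize (Rabs_pos c); lra.
  exists del. split; auto. intros t Ht. specialize (H1 t Ht).
  replace (c * f t - c * f x) with (c * (f t - f x)) by ring. rewrite Rabs_mult.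
  generalize (Rabs_pos c) (Rabs_pos (f t - f x)); intros.
  assert (Rabs c * Rabs (f t - f x) <= Rabs c * (eps / (Rabs c + 1))) by nra.
  assert (Rabs c * (eps / (Rabs c + 1)) < eps).
  { apply Rmult_lt_reg_r with (Rabs c + 1). lra. replace (Rabs c * (eps / (Rabs c + 1)) * (Rabs c + 1)) with (Rabs c * eps) by (field; lra). nra. }
  lra. Qed.

Definition LC (f : R -> R) x := forall eps, 0 < eps -> exists del, 0 < del /\ forall t, x - del < t <= x -> Rabs (f t - f x) < eps.
Definition RC (f : R -> R) x := forall eps, 0 < eps -> exists del, 0 < del /\ forall t, x <= t < x + del -> Rabs (f t - f x) < eps.
Definition PC (f : R -> R) a b := forall x, a <= x <= b -> (a < x -> LC f x) /\ (x < b -> RC f x).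

Lemma LR_cont (f : R -> R) x : LC f x -> RC f x -> continuous f x.
Proof. intros HL HR. apply eps_cont. intros eps He.
  destruct (HL eps He) as [d1 [Hd1 H1]]. destruct (HR eps He) as [d2 [Hd2 H2]].
  exists (Rmin d1 d2). split. apply Rmin_pos; auto. intros t Ht.
  apply Rabs_def2 in Ht. generalize (Rmin_l d1 d2) (Rmin_r d1 d2); intros.
  destruct (Rle_lt_dec t x). apply H1; lra. apply H2; lra. Qed.

Lemma cont_LC (f : R -> R) x : continuous f x -> LC f x.
Proof. intros H eps He. destruct (cont_eps f x H eps He) as [d [Hd H1]]. exists d; split; auto.
  intros t Ht. apply H1. apply Rabs_def1; lra. Qed.
Lemma cont_RC (f : R -> R) x : continuous f x -> RC f x.
Proof. intros H eps He. destruct (cont_eps f x H eps He) as [d [Hd H1]]. exists d; split; auto.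
  intros t Ht. apply H1. apply Rabs_def1; lra. Qed.

Lemma PC_ext (f g : R -> R) a b : (forall x, continuous g x) -> (forall t, a <= t <= b -> f t = g t) -> PC f a b.
Proof. intros Hg He x Hx. split.
  - intros Hax eps Heps. destruct (cont_LC g x (Hg x) eps Heps) as [d [Hd H1]].
    exists (Rmin d (x - a)). split. apply Rmin_pos; lra. intros t Ht.
    generalize (Rmin_l d (x-a)) (Rmin_r d (x-a)); intros.
    rewrite !He by lra. apply H1; lra.
  - intros Hxb eps Heps. destruct (cont_RC g x (Hg x) eps Heps) as [d [Hd H1]].
    exists (Rmin d (b - x)). split. apply Rmin_pos; lra. intros t Ht.
    generalize (Rmin_l d (b-x)) (Rmin_r d (b-x)); intros.
    rewrite !He by lra. apply H1; lra. Qed.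

Lemma PC_trans f a b c : a <= b <= c -> PC f a b -> PC f b c -> PC f a c.
Proof. intros Hb H1 H2 x Hx. destruct (Rlt_le_dec x b).
  - destruct (H1 x ltac:(lra)) as [A B]. split; intros; [apply A; lra|apply B; lra].
  - destruct (H2 x ltac:(lra)) as [A B]. destruct (Req_dec x b).
    + subst x. destruct (H1 b ltac:(lra)) as [C D]. split; intros; [apply C; lra|apply B; lra].
    + split; intros; [apply A; lra|apply B; lra]. Qed.

Lemma PC_cont (f : R -> R) a b x : PC f a b -> a < x < b -> continuous f x.
Proof. intros H Hx. destruct (H x ltac:(lra)) as [A B]. apply LR_cont; [apply A|apply B]; lra. Qed.

Lemma cont_phi_scal c a b x : continuous (fun t => c * phi a b t) x.
Proof. apply cont_scal, phi_cont. Qed.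
Lemma cont_zero x : continuous (fun _ : R => 0) x.
Proof. apply continuous_const. Qed.

Lemma PC_point f a : PC f a a.
Proof. intros x Hx. split; intros; lra. Qed.

Lemma PC_block m : PC a_y (tn m) (tn (S m)).
Proof.
  set (A := tn m). set (B := tn (S m)). set (d := dpt A B (S m)).
  assert (HAB : A < B) by apply AB.
  assert (Hd0 : d O = A + 5/6*(B-A)) by apply d_0.
  assert (HdN : d (S m) = B) by apply d_N.
  apply PC_trans with (d O). split. lra. rewrite <- HdN. apply d_mono. lia.
  - apply PC_ext with (phi A (d O)). intros; apply phi_cont.
    intros t Ht. apply ay_phi. auto.
  - rewrite <- HdN. assert (forall k, (k <= S m)%nat -> PC a_y (d O) (d k)).
    { induction k; intros Hk. apply PC_point.
      assert (Hlt : d (S k - 1)%nat < d (S k)) by (apply d_lt; lia).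
      replace (S k - 1)%nat with k in Hlt by lia.
      apply PC_trans with (d k). split. apply d_mono; lia. lra.
      apply IHk; lia.
      apply PC_trans with ((d k + d (S k))/2). lra.
      - apply PC_ext with (fun t => (-1) * phi (d k) ((d k + d (S k))/2) t).
        intros; apply cont_phi_scal.
        intros t Ht. generalize (ay_xl m (S k) t). replace (S k - 1)%nat with k by lia.
        intros H. rewrite H. unfold d, A, B. ring. lia. auto.
      - apply PC_ext with (phi ((d k + d (S k))/2) (d (S k))). intros; apply phi_cont.
        intros t Ht. generalize (ay_xr m (S k) t). replace (S k - 1)%nat with k by lia.
        intros H. apply H. lia. auto. }
    apply H; lia.
Qed.

Lemma PC_ay m : PC a_y 0 (tn m).
Proof. induction m. rewrite tn_0. apply PC_point.
  apply PC_trans with (tn m). split. apply tn_ge0. apply tn_mono; lia. auto. apply PC_block. Qed.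

Lemma PC_ay_neg a : a <= 0 -> PC a_y a 0.
Proof. intros Ha. apply PC_ext with (fun _ => 0). intros; apply cont_zero.
  intros t Ht. destruct (Rlt_le_dec t 0). apply ay_out; auto.
  assert (t = 0) by lra. subst t.
  generalize (AB 0) (ay_phi 0 0); rewrite d_0, tn_0; intros Hab H; rewrite H; [apply phi_a; lra | lra]. Qed.

Lemma xi_bound p q t : p < q -> Rabs (xi p q t) <= (q - p)/8.
Proof. intros H. unfold xi. destruct Rle_dec.
  - rewrite Rabs_Ropp. generalize (phi_bound p ((p+q)/2) t ltac:(lra)). lra.
  - generalize (phi_bound ((p+q)/2) q t ltac:(lra)). lra. Qed.

Lemma psi_bound a b n t : a < b -> (1 <= n)%nat -> Rabs (psi a b n t) <= (b - a)/4.
Proof. intros Hab Hn. unfold psi. destruct Rle_dec.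
  - generalize (phi_bound a (dpt a b n 0) t). rewrite dpt_0. intros H. generalize (H ltac:(lra)). lra.
  - dem H. destruct (constructive_indefinite_description _ H) as [j [Hj Hjt]]. simpl.
    assert (dpt a b n (j-1) < dpt a b n j) by (apply dpt_smono; auto; lia).
    generalize (xi_bound _ _ t H0). intros.
    assert (dpt a b n j - dpt a b n (j-1) <= b - a).
    { generalize (dpt_n a b n Hn). generalize (dpt_mono a b n j n Hab Hn ltac:(lia)).
      generalize (dpt_mono a b n 0 (j-1) Hab Hn ltac:(lia)). rewrite dpt_0. lra. }
    lra.
    rewrite Rabs_R0. lra. Qed.

Lemma block_of t : 0 <= t < 1 -> exists m, tn m <= t < tn (S m).
Proof. intros Ht. destruct (E_small (1 - t)) as [n Hn]. lra.
  assert (t < tn n) by (rewrite tn_E; lra).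
  clear Hn. induction n. rewrite tn_0 in H; lra.
  destruct (Rlt_le_dec t (tn n)). apply IHn; auto. exists n; lra. Qed.

Lemma ay_bound t : Rabs (a_y t) <= Rabs (1 - t).
Proof. destruct (Rlt_le_dec t 0). rewrite ay_out by auto. rewrite Rabs_R0. apply Rabs_pos.
  destruct (Rlt_le_dec t 1). 2: rewrite ay_out by auto; rewrite Rabs_R0; apply Rabs_pos.
  destruct (block_of t) as [m Hm]. lra.
  rewrite ay_eq with m t by auto. eapply Rle_trans. apply psi_bound. apply AB. lia.
  rewrite Rabs_right by lra. rewrite !tn_E in *. rewrite !E_S in *.
  generalize e_bounds (E_pos m); intros.
  assert ((E m - E m / exp 1) / 4 <= E m / exp 1).
  { apply Rmult_le_reg_r with (4 * exp 1). lra.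
    replace ((E m - E m / exp 1) / 4 * (4 * exp 1)) with (E m * (exp 1 - 1)) by (field; lra).
    replace (E m / exp 1 * (4 * exp 1)) with (E m * 4) by (field; lra). nra. }
  lra. Qed.

Lemma ay_cont x : continuous a_y x.
Proof.
  destruct (Rlt_le_dec x 1).
  - destruct (E_small (1 - x)) as [n Hn]. lra.
    assert (x < tn n) by (rewrite tn_E; lra).
    apply (PC_cont a_y (Rmin (-1) (x - 1)) (tn n)). apply PC_trans with 0.
    split. generalize (Rmin_l (-1) (x-1)); lra. apply tn_ge0.
    apply PC_ay_neg. generalize (Rmin_l (-1) (x-1)); lra. apply PC_ay.
    generalize (Rmin_r (-1) (x-1)); lra.
  - destruct (Req_dec x 1).
    + subst x. apply LR_cont.
      * intros eps He. exists eps. split; auto. intros t Ht. rewrite (ay_out 1) by lra.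
        rewrite Rminus_0_r. eapply Rle_lt_trans. apply ay_bound. rewrite Rabs_right; lra.
      * intros eps He. exists 1. split; [lra|]. intros t Ht. rewrite !ay_out by lra.
        rewrite Rminus_0_r, Rabs_R0. auto.
    + apply (PC_cont a_y 1 (x+1)). apply PC_ext with (fun _ => 0). intros; apply cont_zero.
      intros; apply ay_out; lra. lra.
Qed.

Section AX.
Variable tau : nat -> option nat.

Lemma PC_win a : PC (a_x tau) (tminus (S a)) (tminus (S (S a))).
Proof.
  generalize (win_lt a) (ineq_win a); intros.
  apply PC_trans with (tn (S a)). lra.
  apply PC_ext with (fun t => coef tau (S a) * phi (tminus (S a)) (tn (S a)) t).
  intros; apply cont_phi_scal. intros; apply (ax_left tau a); lra.
  apply PC_trans with (tplus (S a)). lra.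
  apply PC_ext with (fun t => - coef tau (S a) * phi (tn (S a)) (tplus (S a)) t).
  intros; apply cont_phi_scal. intros; apply (ax_right tau a); lra.
  apply PC_ext with (fun _ => 0). intros; apply cont_zero. intros; apply (ax_gap tau a); lra.
Qed.

Lemma PC_ax lo a : lo <= tminus 1 -> PC (a_x tau) lo (tminus (S a)).
Proof. intros Hlo. induction a.
  - apply PC_ext with (fun _ => 0). intros; apply cont_zero. intros; apply ax_init; lra.
  - apply PC_trans with (tminus (S a)). split. generalize (tminus_mono 0 a ltac:(lia)); lra.
    generalize (win_lt a) (ineq_win a); lra. auto. apply PC_win. Qed.

Lemma ax_bound t : Rabs (a_x tau t) <= Rabs (1 - t).
Proof.
  destruct (Rlt_le_dec t 1). 2: rewrite ax_ge1 by auto; rewrite Rabs_R0; apply Rabs_pos.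
  destruct (excluded_middle_informative (exists a, tminus (S a) <= t < tplus (S a))) as [[a Ha]|Hn].
  - rewrite (ax_eq tau a t Ha). rewrite Rabs_mult, Rabs_Ropp.
    generalize (win_lt a) (coef_bounds tau (S a)); intros.
    generalize (xi_bound (tminus (S a)) (tplus (S a)) t ltac:(lra)); intros.
    rewrite (Rabs_right (coef tau (S a))) by lra.
    assert (Rabs (xi (tminus (S a)) (tplus (S a)) t) <= Rabs (1 - t)).
    { rewrite (Rabs_right (1-t)) by lra. eapply Rle_trans. apply H1.
      rewrite tminus_S, tplus_S in *. generalize (tplus_E a) (Lb_E a) e_bounds (E_pos a); intros.
      rewrite tplus_S in H2. assert (1 - t > E a * (6 / (5 * exp 1) - 1 / 5)) by lra.
      assert (E a * (6 / (5 * exp 1) - 1 / 5) >= E a / 5).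
      { assert (6 / (5 * exp 1) >= 2/5). { apply Rle_ge. apply Rmult_le_reg_r with (5 * exp 1). lra.
          replace (6 / (5 * exp 1) * (5 * exp 1)) with 6 by (field; lra). lra. }
        nra. }
      assert (0 < / exp 1) by (apply Rinv_0_lt_compat; lra).
      assert (Lb a <= E a) by (rewrite H3; nra). assert (tn (S a) - tn a = Lb a) by reflexivity. lra. }
    apply Rle_trans with (1 * Rabs (xi (tminus (S a)) (tplus (S a)) t)).
    apply Rmult_le_compat_r. apply Rabs_pos. lra. lra.
  - rewrite ax_none. rewrite Rabs_R0; apply Rabs_pos. intros a Ha. apply Hn. exists a; auto.
Qed.

Lemma ax_cont x : continuous (a_x tau) x.
Proof.
  destruct (Rlt_le_dec x 1).
  - destruct (E_small ((1 - x) / (1/5 + 4/(5*exp 1)))) as [n Hn].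
    apply Rdiv_lt_0_compat. lra. apply coefs_pos.
    assert (x < tminus (S n)).
    { rewrite tminus_E. generalize e_bounds coefs_pos; intros ? [H1 _].
      apply Rmult_lt_compat_r with (r := 1/5 + 4/(5*exp 1)) in Hn; auto.
      replace ((1 - x) / (1 / 5 + 4 / (5 * exp 1)) * (1 / 5 + 4 / (5 * exp 1))) with (1 - x) in Hn by (field; lra). lra. }
    apply (PC_cont (a_x tau) (Rmin (x-1) (tminus 1)) (tminus (S n))). apply PC_ax.
    apply Rmin_r. generalize (Rmin_l (x-1) (tminus 1)); lra.
  - destruct (Req_dec x 1).
    + subst x. apply LR_cont.
      * intros eps He. exists eps. split; auto. intros t Ht. rewrite (ax_ge1 tau 1) by lra.
        rewrite Rminus_0_r. eapply Rle_lt_trans. apply ax_bound. rewrite Rabs_right; lra.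
      * intros eps He. exists 1. split; [lra|]. intros t Ht. rewrite !ax_ge1 by lra.
        rewrite Rminus_0_r, Rabs_R0. auto.
    + apply (PC_cont (a_x tau) 1 (x+1)). apply PC_ext with (fun _ => 0). intros; apply cont_zero.
      intros; apply ax_ge1; lra. lra.
Qed.
End AX.

Section Gen.
Variable f : R -> R.
Hypothesis fc : forall x, continuous f x.

Lemma exf a b : ex_RInt f a b.
Proof. apply (ex_RInt_continuous (V:=R_CompleteNormedModule)). intros; apply fc. Qed.

Lemma chas p t : RInt f 0 t = RInt f 0 p + RInt f p t :> R.
Proof. rewrite <- (RInt_Chasles f 0 p t) by apply exf. reflexivity. Qed.

Lemma prim p t (g G : R -> R) : p <= t -> (forall x, p <= x <= t -> f x = g x) ->
  (forall x, is_derive G x (g x)) -> (forall x, continuous g x) -> RInt f p t = G t - G p :> R.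
Proof. intros Hpt He Hd Hc. rewrite (RInt_ext f g).
  apply is_RInt_unique. apply (is_RInt_derive G g). intros; apply Hd. intros; apply Hc.
  intros x Hx. rewrite Rmin_left, Rmax_right in Hx by lra. apply He; lra. Qed.

Lemma V_deriv x : is_derive (fun t => RInt f 0 t) x (f x).
Proof. apply is_derive_RInt with 0. apply filter_forall. intros b. apply RInt_correct, exf. apply fc. Qed.

Lemma V_cont x : continuous (fun t => RInt f 0 t) x.
Proof. apply (ex_derive_continuous (fun t => RInt f 0 t)). eexists; apply V_deriv. Qed.
End Gen.

Lemma cont_scal' c (g : R -> R) : (forall x, continuous g x) -> forall x, continuous (fun t => c * g t) x.
Proof. intros; apply cont_scal; auto. Qed.

Lemma deriv_scal c (G g : R -> R) x : is_derive G x (g x) -> is_derive (fun t => c * G t) x (c * g x).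
Proof. intros H. apply (is_derive_scal G x c (g x)) in H. apply H. Qed.

Lemma bump (f : R -> R) (fc : forall x, continuous f x) sg Y p q : p < q ->
  RInt f 0 p = 0 :> R -> RInt (fun u => RInt f 0 u) 0 p = Y :> R ->
  (forall x, p <= x <= q -> f x = sg * phi p q x) ->
  forall t, p <= t <= q -> RInt f 0 t = sg * Fb p q t :> R /\ RInt (fun u => RInt f 0 u) 0 t = Y + sg * Gb p q t :> R.
Proof.
  intros Hpq HV HS Hf.
  assert (HVt : forall t, p <= t <= q -> RInt f 0 t = sg * Fb p q t :> R).
  { intros t Ht. rewrite (chas f fc p t), HV.
    rewrite (prim f p t (fun x => sg * phi p q x) (fun x => sg * Fb p q x)).
    rewrite Fb_a by auto. ring. lra. intros; apply Hf; lra.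
    intros; apply deriv_scal, phi_deriv; auto. apply cont_scal'. intros; apply phi_cont. }
  intros t Ht. split. auto.
  rewrite (chas (fun u => RInt f 0 u) (V_cont f fc) p t), HS.
  rewrite (prim (fun u => RInt f 0 u) p t (fun x => sg * Fb p q x) (fun x => sg * Gb p q x)).
  rewrite Gb_a by auto. ring. lra. intros; apply HVt; lra.
  intros; apply deriv_scal, Fb_deriv; auto. apply cont_scal'. intros; apply Fb_cont; auto.
Qed.

Lemma vy_cont x : continuous v_y x.
Proof. apply V_cont. apply ay_cont. Qed.
Lemma vx_cont tau x : continuous (v_x tau) x.
Proof. apply V_cont. apply ax_cont. Qed.
Lemma sy_cont x : continuous s_y x.
Proof. apply V_cont. apply vy_cont. Qed.
Lemma sx_cont tau x : continuous (s_x tau) x.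
Proof. apply V_cont. apply vx_cont. Qed.

Fixpoint Yb (m : nat) : R := match m with O => 0 | S k => Yb k + (5/6 * Lb k)^3/(8*PI) end.
Definition dl (m : nat) : R := (Lb m / (12 * INR (S m)))^3/(8*PI).

Lemma Gb_le a b s t : a < b -> s <= t -> Gb a b s <= Gb a b t.
Proof. intros. destruct (Req_dec s t). subst; lra. apply Rlt_le, Gb_incr; lra. Qed.

Lemma Gb_range a b t : a < b -> a <= t <= b -> 0 <= Gb a b t <= (b-a)^3/(8*PI).
Proof. intros. rewrite <- (Gb_a a b), <- (Gb_b a b) by auto. split; apply Gb_le; lra. Qed.

Lemma bump_y sg Y p q : p < q -> v_y p = 0 -> s_y p = Y ->
  (forall x, p <= x <= q -> a_y x = sg * phi p q x) ->
  forall t, p <= t <= q -> v_y t = sg * Fb p q t /\ s_y t = Y + sg * Gb p q t.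
Proof. intros. unfold s_y, v_y in *. apply (bump a_y ay_cont); auto. Qed.

Lemma half_len m k : (1 <= S k <= S m)%nat ->
  let d := dpt (tn m) (tn (S m)) (S m) in
  (d k + d (S k))/2 - d k = Lb m / (12 * INR (S m)) /\ d (S k) - (d k + d (S k))/2 = Lb m / (12 * INR (S m)).
Proof. intros H d. unfold d. rewrite dpt_S by lia. unfold Lb. generalize (INR_pos (S m) ltac:(lia)); intros.
  split; field; lra. Qed.

Lemma block_y m : v_y (tn m) = 0 -> s_y (tn m) = Yb m ->
  (forall t, tn m <= t <= dpt (tn m) (tn (S m)) (S m) 0 -> s_y t = Yb m + Gb (tn m) (dpt (tn m) (tn (S m)) (S m) 0) t) /\
  (forall t, dpt (tn m) (tn (S m)) (S m) 0 <= t <= tn (S m) -> Yb (S m) - dl m <= s_y t <= Yb (S m)) /\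
  v_y (tn (S m)) = 0 /\ s_y (tn (S m)) = Yb (S m).
Proof.
  intros HV HS.
  set (A := tn m). set (B := tn (S m)). set (d := dpt A B (S m)).
  assert (HAB : A < B) by apply AB.
  assert (Hd0 : d O = A + 5/6*(B-A)) by apply d_0.
  assert (HdN : d (S m) = B) by apply d_N.
  assert (Hph : forall t, A <= t <= d O -> v_y t = 1 * Fb A (d O) t /\ s_y t = Yb m + 1 * Gb A (d O) t).
  { apply bump_y; auto. lra. intros. rewrite Rmult_1_l. apply ay_phi; auto. }
  assert (HV0 : v_y (d O) = 0). { rewrite (proj1 (Hph (d O) ltac:(lra))). rewrite Fb_b; lra. }
  assert (HS0 : s_y (d O) = Yb (S m)).
  { rewrite (proj2 (Hph (d O) ltac:(lra))). rewrite Gb_b by lra. simpl. rewrite Hd0. unfold Lb. fold A B. field.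
    generalize PI_RGT_0; lra. }
  assert (Hind : forall k, (k <= S m)%nat -> v_y (d k) = 0 /\ s_y (d k) = Yb (S m) /\
     forall t, d O <= t <= d k -> Yb (S m) - dl m <= s_y t <= Yb (S m)).
  { induction k; intros Hk.
    - split; auto. split; auto. intros t Ht. assert (t = d O) by lra. subst t. rewrite HS0.
      assert (0 <= dl m). { unfold dl. apply Rmult_le_pos. apply pow_le. apply Rdiv_le_0_compat.
        generalize (Lb_pos m); lra. generalize (INR_pos (S m) ltac:(lia)); lra. apply Rlt_le, Rinv_0_lt_compat. generalize PI_RGT_0; lra. }
      lra.
    - destruct (IHk ltac:(lia)) as [Hv [Hs Hb]].
      assert (Hlt : d k < d (S k)). { generalize (d_lt m (S k) ltac:(lia)). replace (S k - 1)%nat with k by lia. auto. }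
      destruct (half_len m k ltac:(lia)) as [Hh1 Hh2]. fold A B d in Hh1, Hh2.
      set (mid := (d k + d (S k))/2) in *.
      assert (H1 : forall t, d k <= t <= mid -> v_y t = -1 * Fb (d k) mid t /\ s_y t = Yb (S m) + -1 * Gb (d k) mid t).
      { apply bump_y; auto. unfold mid; lra. intros x Hx. generalize (ay_xl m (S k) x). replace (S k - 1)%nat with k by lia.
        intros H. rewrite H. fold A B d. unfold mid. ring. lia. auto. }
      assert (Hvm : v_y mid = 0). { rewrite (proj1 (H1 mid ltac:(unfold mid; lra))). rewrite Fb_b. ring. unfold mid; lra. }
      assert (Hsm : s_y mid = Yb (S m) - dl m).
      { rewrite (proj2 (H1 mid ltac:(unfold mid; lra))). rewrite Gb_b by (unfold mid; lra). rewrite Hh1. unfold dl. ring. }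
      assert (H2 : forall t, mid <= t <= d (S k) -> v_y t = 1 * Fb mid (d (S k)) t /\ s_y t = (Yb (S m) - dl m) + 1 * Gb mid (d (S k)) t).
      { apply bump_y; auto. unfold mid; lra. intros x Hx. generalize (ay_xr m (S k) x). replace (S k - 1)%nat with k by lia.
        intros H. rewrite H. fold A B d. unfold mid. ring. lia. auto. }
      split. rewrite (proj1 (H2 (d (S k)) ltac:(unfold mid; lra))). rewrite Fb_b. ring. unfold mid; lra.
      split. rewrite (proj2 (H2 (d (S k)) ltac:(unfold mid; lra))). rewrite Gb_b by (unfold mid; lra). rewrite Hh2. unfold dl. ring.
      intros t Ht. destruct (Rle_lt_dec t (d k)). apply Hb; lra.
      destruct (Rle_lt_dec t mid).
      + rewrite (proj2 (H1 t ltac:(lra))). generalize (Gb_range (d k) mid t ltac:(unfold mid; lra) ltac:(lra)).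
        rewrite Hh1. unfold dl. lra.
      + rewrite (proj2 (H2 t ltac:(lra))). generalize (Gb_range mid (d (S k)) t ltac:(unfold mid; lra) ltac:(lra)).
        rewrite Hh2. unfold dl. lra. }
  destruct (Hind (S m) (le_n _)) as [Hv [Hs Hb]]. rewrite HdN in *.
  split. intros t Ht. rewrite (proj2 (Hph t Ht)). ring.
  split; auto.
Qed.

Lemma yb_all m : v_y (tn m) = 0 /\ s_y (tn m) = Yb m.
Proof. induction m.
  - rewrite tn_0. unfold v_y, s_y. rewrite !RInt_point. simpl. auto.
  - destruct IHm. destruct (block_y m H H0) as [_ [_ [H1 H2]]]. auto. Qed.

Section X.
Variable tau : nat -> option nat.

Lemma bump_x sg Y p q : p < q -> v_x tau p = 0 -> s_x tau p = Y ->
  (forall x, p <= x <= q -> a_x tau x = sg * phi p q x) ->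
  forall t, p <= t <= q -> v_x tau t = sg * Fb p q t /\ s_x tau t = Y + sg * Gb p q t.
Proof. intros. unfold s_x, v_x in *. apply (bump (a_x tau) (ax_cont tau)); auto. Qed.

Lemma x_init : (forall t, 0 <= t <= tminus 1 -> s_x tau t = 0) /\ v_x tau (tminus 1) = 0 /\ s_x tau (tminus 1) = 0.
Proof.
  assert (H0 : 0 < tminus 1). { generalize (win_lt 0). rewrite tminus_S, tn_0. generalize (Lb_pos 0). lra. }
  assert (H : forall t, 0 <= t <= tminus 1 -> v_x tau t = 0 * Fb 0 (tminus 1) t /\ s_x tau t = 0 + 0 * Gb 0 (tminus 1) t).
  { apply bump_x; auto. unfold v_x; rewrite RInt_point; reflexivity. unfold s_x; rewrite RInt_point; reflexivity.
    intros. rewrite ax_init by lra. ring. }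
  split. intros. rewrite (proj2 (H t H1)). ring.
  split. rewrite (proj1 (H (tminus 1) ltac:(lra))). ring. rewrite (proj2 (H (tminus 1) ltac:(lra))). ring. Qed.

Lemma win_x a : v_x tau (tminus (S a)) = 0 -> s_x tau (tminus (S a)) = 0 ->
  (forall t, tminus (S a) <= t <= tn (S a) -> s_x tau t = coef tau (S a) * Gb (tminus (S a)) (tn (S a)) t) /\
  (forall t, tn (S a) <= t <= tplus (S a) -> s_x tau t = coef tau (S a) * (Lb a / 5)^3/(8*PI) - coef tau (S a) * Gb (tn (S a)) (tplus (S a)) t) /\
  (forall t, tplus (S a) <= t <= tminus (S (S a)) -> s_x tau t = 0) /\
  v_x tau (tminus (S (S a))) = 0 /\ s_x tau (tminus (S (S a))) = 0.
Proof.
  intros HV HS. generalize (win_lt a) (ineq_win a); intros HW HG.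
  set (P := tminus (S a)) in *. set (T := tn (S a)) in *. set (Q := tplus (S a)) in *. set (c := coef tau (S a)).
  assert (HTP : T - P = Lb a / 5) by (unfold T, P; rewrite tminus_S; unfold Lb; field).
  assert (HQT : Q - T = Lb a / 5) by (unfold T, Q; rewrite tplus_S; unfold Lb; field).
  assert (H1 : forall t, P <= t <= T -> v_x tau t = c * Fb P T t /\ s_x tau t = 0 + c * Gb P T t).
  { apply bump_x; auto. lra. intros. apply (ax_left tau a); auto. }
  assert (HvT : v_x tau T = 0) by (rewrite (proj1 (H1 T ltac:(lra))), Fb_b by lra; ring).
  assert (HsT : s_x tau T = c * (Lb a / 5)^3/(8*PI)).
  { rewrite (proj2 (H1 T ltac:(lra))), Gb_b by lra. rewrite HTP. unfold Rdiv. ring. }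
  assert (H2 : forall t, T <= t <= Q -> v_x tau t = - c * Fb T Q t /\ s_x tau t = c * (Lb a / 5)^3/(8*PI) + - c * Gb T Q t).
  { apply bump_x; auto. lra. intros. apply (ax_right tau a); auto. }
  assert (HvQ : v_x tau Q = 0) by (rewrite (proj1 (H2 Q ltac:(lra))), Fb_b by lra; ring).
  assert (HsQ : s_x tau Q = 0).
  { rewrite (proj2 (H2 Q ltac:(lra))), Gb_b by lra. rewrite HQT. unfold Rdiv. ring. }
  assert (H3 : forall t, Q <= t <= tminus (S (S a)) -> v_x tau t = 0 * Fb Q (tminus (S (S a))) t /\ s_x tau t = 0 + 0 * Gb Q (tminus (S (S a))) t).
  { apply bump_x; auto. intros. rewrite (ax_gap tau a) by auto. ring. }
  split. intros t Ht. rewrite (proj2 (H1 t Ht)). ring.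
  split. intros t Ht. rewrite (proj2 (H2 t Ht)). ring.
  split. intros t Ht. rewrite (proj2 (H3 t Ht)). ring.
  split. rewrite (proj1 (H3 (tminus (S (S a))) ltac:(lra))). ring. rewrite (proj2 (H3 (tminus (S (S a))) ltac:(lra))). ring.
Qed.

Lemma x_all a : v_x tau (tminus (S a)) = 0 /\ s_x tau (tminus (S a)) = 0.
Proof. induction a. destruct x_init as [_ [H1 H2]]. auto.
  destruct IHa. destruct (win_x a H H0) as [_ [_ [_ [H1 H2]]]]. auto. Qed.
End X.

Definition Ttarget : R := 5 ^ 3 * (exp 1 - 1) ^ 3 / (6 ^ 3 * 8 * PI * (exp 1 ^ 3 - 1)).
Definition rr : R := (/ exp 1) ^ 3.
Definition KK : R := (5/6)^3 * (1 - / exp 1)^3 / (8 * PI).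

Lemma E_pow k : E k = (/ exp 1) ^ k.
Proof. induction k. rewrite E_0; simpl; auto. rewrite E_S, IHk. simpl. unfold Rdiv. ring. Qed.

Lemma inv_e : 0 < / exp 1 < 1.
Proof. generalize e_bounds; intros. split. apply Rinv_0_lt_compat; lra.
  apply Rmult_lt_reg_r with (exp 1). lra. rewrite Rinv_l by lra. lra. Qed.

Lemma rr_bounds : 0 < rr < 1.
Proof. unfold rr. generalize e_bounds; intros. assert (0 < / exp 1 < 1).
  apply inv_e.
  split. apply pow_lt; lra. set (x := / exp 1) in *.
  replace (x^3) with (x * (x * x)) by ring.
  assert (x * x < 1). { apply Rlt_trans with (x * 1). apply Rmult_lt_compat_l; lra. lra. }
  apply Rlt_trans with (x * 1). apply Rmult_lt_compat_l; lra. lra. Qed.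

Lemma Yb_closed m : Yb m = KK * (1 - rr ^ m) / (1 - rr).
Proof. generalize rr_bounds; intros. induction m.
  - simpl. field. lra.
  - simpl Yb. rewrite IHm. rewrite Lb_E, E_pow.
    assert (Hr : rr ^ m = ((/ exp 1)^m)^3) by (unfold rr; rewrite <- !pow_mult; f_equal; lia).
    replace (rr ^ S m) with (rr * rr ^ m) by reflexivity. rewrite Hr.
    unfold KK. generalize PI_RGT_0 e_bounds; intros. field. repeat split; lra. Qed.

Lemma KK_T : KK / (1 - rr) = Ttarget.
Proof. unfold KK, rr, Ttarget. generalize e_bounds PI_RGT_0; intros.
  assert (exp 1 ^ 3 - 1 > 0). { simpl. nra. }
  field. repeat split; try lra. Qed.

Lemma KK_pos : 0 < KK.
Proof. unfold KK. generalize e_bounds PI_RGT_0; intros.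
  assert (0 < 1 - / exp 1). { generalize inv_e; lra. }
  apply Rdiv_lt_0_compat. apply Rmult_lt_0_compat. apply pow_lt; lra. apply pow_lt; lra. lra. Qed.

Lemma Yb_lt_T m : Yb m < Ttarget.
Proof. rewrite Yb_closed, <- KK_T. generalize rr_bounds KK_pos; intros.
  assert (0 < rr ^ m) by (apply pow_lt; lra).
  unfold Rdiv. apply Rmult_lt_compat_r. apply Rinv_0_lt_compat; lra. nra. Qed.

Lemma Yb_incr m : Yb m < Yb (S m).
Proof. simpl. assert (0 < (5/6 * Lb m)^3/(8*PI)). apply Rdiv_lt_0_compat. apply pow_lt.
  generalize (Lb_pos m); lra. generalize PI_RGT_0; lra. lra. Qed.

Lemma Yb_mono m k : (m <= k)%nat -> Yb m <= Yb k.
Proof. induction 1. lra. generalize (Yb_incr m0); lra. Qed.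

Lemma T_Yb_diff m : Ttarget - Yb m <= Ttarget * E m.
Proof. rewrite Yb_closed, <- KK_T. generalize rr_bounds KK_pos; intros.
  assert (rr ^ m <= E m). { rewrite E_pow. unfold rr.
    replace (((/ exp 1)^3)^m) with (((/ exp 1)^m)^3) by (rewrite <- !pow_mult; f_equal; lia).
    generalize (E_pos m) (E_mono 0 m ltac:(lia)). rewrite E_0, E_pow. intros.
    set (y := (/ exp 1)^m) in *. assert (y * y <= 1) by nra. simpl. nra. }
  replace (KK / (1 - rr) - KK * (1 - rr ^ m) / (1 - rr)) with (KK / (1 - rr) * rr ^ m) by (field; lra).
  apply Rmult_le_compat_l. apply Rlt_le, Rdiv_lt_0_compat; lra. auto. Qed.

Lemma zero_eps x : (forall eps, 0 < eps -> Rabs x < eps) -> x = 0.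
Proof. intros H. destruct (Req_dec x 0); auto. exfalso.
  generalize (H (Rabs x) (Rabs_pos_lt x H0)). lra. Qed.

Lemma sy_1 : s_y 1 = Ttarget.
Proof.
  apply Rminus_diag_uniq. apply zero_eps. intros eps He.
  destruct (cont_eps s_y 1 (sy_cont 1) (eps/2)) as [del [Hd H1]]. lra.
  assert (HT : 0 < Ttarget) by (rewrite <- KK_T; apply Rdiv_lt_0_compat; [apply KK_pos| generalize rr_bounds; lra]).
  destruct (E_small (Rmin del (eps / (2 * (Ttarget + 1))))) as [m Hm].
  apply Rmin_pos; auto. apply Rdiv_lt_0_compat; lra.
  generalize (Rmin_l del (eps / (2 * (Ttarget + 1)))) (Rmin_r del (eps / (2 * (Ttarget + 1)))); intros.
  assert (Rabs (s_y (tn m) - s_y 1) < eps/2). { apply H1. rewrite tn_E. rewrite Rabs_left. lra. generalize (E_pos m); lra. }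
  rewrite (proj2 (yb_all m)) in H2.
  generalize (T_Yb_diff m) (Yb_lt_T m) (E_pos m); intros.
  assert (Ttarget * E m < eps/2).
  { apply Rle_lt_trans with ((Ttarget + 1) * E m). nra.
    apply Rmult_lt_reg_l with (/ (Ttarget + 1)). apply Rinv_0_lt_compat; lra.
    rewrite <- Rmult_assoc, Rinv_l by lra. replace (/ (Ttarget + 1) * (eps / 2)) with (eps / (2 * (Ttarget + 1))) by (field; lra). lra. }
  apply Rabs_def2 in H2. apply Rabs_def1; lra.
Qed.

Lemma sx_1 tau : s_x tau 1 = 0.
Proof.
  apply zero_eps. intros eps He. rewrite <- (Rminus_0_r (s_x tau 1)).
  destruct (cont_eps (s_x tau) 1 (sx_cont tau 1) eps) as [del [Hd H1]]. auto.
  destruct (E_small (del / (1/5 + 4/(5*exp 1)))) as [m Hm].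
  apply Rdiv_lt_0_compat; auto. apply coefs_pos.
  assert (Habs : Rabs (tminus (S m) - 1) < del).
  { rewrite tminus_E. generalize coefs_pos e_bounds (E_pos m); intros [H0 _] He2 HE.
    rewrite Rabs_left. 2: nra.
    apply Rmult_lt_compat_r with (r := 1/5 + 4/(5*exp 1)) in Hm; auto.
    replace (del / (1 / 5 + 4 / (5 * exp 1)) * (1 / 5 + 4 / (5 * exp 1))) with del in Hm by (field; lra). lra. }
  specialize (H1 _ Habs). rewrite (proj2 (x_all tau m)) in H1.
  rewrite Rabs_minus_sym. auto.
Qed.

Definition D0 m := tn m + 5/6 * Lb m.

Lemma D0_eq m : dpt (tn m) (tn (S m)) (S m) 0 = D0 m.
Proof. apply d0_S. Qed.

Lemma D0_bounds m : tn m < D0 m < tn (S m).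
Proof. unfold D0. generalize (Lb_pos m). unfold Lb. lra. Qed.

Lemma sy_phi m t : tn m <= t <= D0 m -> s_y t = Yb m + Gb (tn m) (D0 m) t.
Proof. intros. destruct (yb_all m) as [H1 H2]. destruct (block_y m H1 H2) as [H3 _].
  rewrite D0_eq in H3. apply H3; auto. Qed.

Lemma sy_dip m t : D0 m <= t <= tn (S m) -> Yb (S m) - dl m <= s_y t <= Yb (S m).
Proof. intros. destruct (yb_all m) as [H1 H2]. destruct (block_y m H1 H2) as [_ [H3 _]].
  rewrite D0_eq in H3. apply H3; auto. Qed.

Lemma sy_D0 m : s_y (D0 m) = Yb (S m).
Proof. generalize (D0_bounds m); intros. rewrite (sy_phi m) by lra. rewrite Gb_b by lra. simpl.
  unfold D0. f_equal. f_equal. ring. Qed.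

Lemma sy_phi_le m t : tn m <= t <= D0 m -> s_y t <= Yb (S m).
Proof. intros. rewrite <- sy_D0. generalize (D0_bounds m); intros. rewrite !(sy_phi m) by lra.
  generalize (Gb_le (tn m) (D0 m) t (D0 m)); lra. Qed.
Lemma sy_phi_lt m t : tn m <= t < D0 m -> s_y t < Yb (S m).
Proof. intros. rewrite <- sy_D0. generalize (D0_bounds m); intros. rewrite !(sy_phi m) by lra.
  generalize (Gb_incr (tn m) (D0 m) t (D0 m)); lra. Qed.
Lemma sy_phi_incr m t t' : tn m <= t -> t < t' -> t' <= D0 m -> s_y t < s_y t'.
Proof. intros. generalize (D0_bounds m); intros. rewrite !(sy_phi m) by lra.
  generalize (Gb_incr (tn m) (D0 m) t t'); lra. Qed.
Lemma sy_phi_ge m t : tn m <= t <= D0 m -> Yb m <= s_y t.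
Proof. intros. generalize (D0_bounds m); intros. rewrite (sy_phi m) by lra.
  generalize (Gb_range (tn m) (D0 m) t); lra. Qed.
Lemma sy_phi_gt m t : tn m < t <= D0 m -> Yb m < s_y t.
Proof. intros. generalize (D0_bounds m); intros. rewrite (sy_phi m) by lra.
  generalize (Gb_incr (tn m) (D0 m) (tn m) t) (Gb_a (tn m) (D0 m)); lra. Qed.

Lemma dl_bound m : dl m <= (5/6 * Lb m / 10)^3/(8*PI).
Proof. unfold dl. generalize (Lb_pos m) PI_RGT_0 (pos_INR m); intros.
  replace (5/6 * Lb m / 10) with (Lb m / 12) by field.
  unfold Rdiv. apply Rmult_le_compat_r. apply Rlt_le, Rinv_0_lt_compat; lra.
  rewrite S_INR. apply pow_incr. split. apply Rmult_le_pos. lra. apply Rlt_le, Rinv_0_lt_compat; lra.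
  apply Rmult_le_compat_l. lra. apply Rinv_le_contravar; lra. Qed.

Lemma Y3 m : s_y (tplus m) < Yb (S m) - dl m.
Proof.
  generalize (ineq_prev m) (D0_bounds m) (Lb_pos m) PI_RGT_0 PI_ge3; intros.
  set (l := 5/6 * Lb m).
  assert (HD : D0 m = tn m + l) by reflexivity.
  assert (tplus m <= tn m + 3/4 * l) by (unfold l; lra).
  rewrite (sy_phi m) by lra.
  assert (HG1 : Gb (tn m) (D0 m) (tplus m) <= Gb (tn m) (D0 m) (tn m + 3/4*l)) by (apply Gb_le; lra).
  assert (HG2 : Gb (tn m) (D0 m) (tn m + 3/4*l) = l^3/(8*PI) * (3/4 + 1/(2*PI))).
  { unfold Gb. rewrite HD. replace (tn m + l - tn m) with l by ring.
    replace (2 * PI * (tn m + 3 / 4 * l - tn m) / l) with (3 * (PI/2)) by (field; unfold l; lra).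
    rewrite sin_3PI2. field. unfold l; lra. }
  generalize (dl_bound m); intros Hdl. fold l in Hdl.
  simpl Yb. fold l.
  assert (Hpi : 1 / (2 * PI) <= 1/6).
  { apply Rmult_le_reg_r with (6 * PI). lra. replace (1 / (2 * PI) * (6 * PI)) with 3 by (field; lra).
    replace (1/6 * (6*PI)) with PI by field. lra. }
  assert (Hl3 : 0 < l^3/(8*PI)). { apply Rdiv_lt_0_compat. apply pow_lt. unfold l; lra. lra. }
  assert (Hk : (l/10)^3/(8*PI) = l^3/(8*PI) / 1000) by (field; lra).
  rewrite Hk in Hdl. set (X := l^3/(8*PI)) in *. set (Z := 1/(2*PI)) in *.
  assert (X * Z <= X / 6) by nra. nra.
Qed.

Lemma WP m : tplus m < tminus (S m) < D0 m.
Proof. generalize (ineq_prev m) (Lb_pos m). rewrite tminus_S. unfold D0. lra. Qed.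
Lemma WQ m : tn (S m) < tplus (S m) < D0 (S m).
Proof. generalize (ineq_win_d0 m) (win_lt m). unfold D0. lra. Qed.

Lemma dl_pos m : 0 <= dl m.
Proof. unfold dl. apply Rmult_le_pos. apply pow_le. apply Rdiv_le_0_compat.
  generalize (Lb_pos m); lra. generalize (INR_pos (S m) ltac:(lia)); lra.
  apply Rlt_le, Rinv_0_lt_compat. generalize PI_RGT_0; lra. Qed.

Lemma Wy_left m t : tminus (S m) < t <= tn (S m) -> s_y t <= Yb (S m).
Proof. intros. generalize (WP m) (D0_bounds m) (ineq_prev m); intros. destruct (Rle_lt_dec t (D0 m)).
  apply (sy_phi_le m); lra. generalize (sy_dip m t ltac:(lra)); lra. Qed.

Lemma Wy_right m t : tn (S m) < t <= tplus (S m) -> Yb (S m) < s_y t.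
Proof. intros. generalize (WQ m); intros. apply (sy_phi_gt (S m)); lra. Qed.

Lemma Wy_low m t : tminus (S m) < t <= tplus (S m) -> s_y (tplus m) < s_y t.
Proof. intros. generalize (WP m) (D0_bounds m) (ineq_prev m) (Y3 m) (dl_pos m); intros.
  destruct (Rle_lt_dec t (D0 m)).
  - apply (sy_phi_incr m); lra.
  - destruct (Rle_lt_dec t (tn (S m))).
    + generalize (sy_dip m t ltac:(lra)); lra.
    + generalize (Wy_right m t ltac:(lra)); lra. Qed.

Lemma Wy_up m t : tminus (S m) < t <= tplus (S m) -> s_y t <= s_y (tplus (S m)).
Proof. intros. generalize (WQ m); intros. destruct (Rle_lt_dec t (tn (S m))).
  - generalize (Wy_left m t ltac:(lra)) (sy_phi_ge (S m) (tplus (S m)) ltac:(lra)); lra.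
  - destruct (Req_dec t (tplus (S m))). subst; lra.
    apply Rlt_le, (sy_phi_incr (S m)); lra. Qed.

Lemma tplus_chain m : s_y (tplus m) < s_y (tplus (S m)).
Proof. generalize (win_lt m); intros. apply Rlt_le_trans with (s_y (tn (S m))).
  apply Wy_low; lra. apply Wy_up; lra. Qed.
Lemma tplus_mono_y m k : (m <= k)%nat -> s_y (tplus m) <= s_y (tplus k).
Proof. induction 1. lra. generalize (tplus_chain m0); lra. Qed.

Section WX.
Variable tau : nat -> option nat.

Lemma sx_wl m t : tminus (S m) <= t <= tn (S m) -> s_x tau t = coef tau (S m) * Gb (tminus (S m)) (tn (S m)) t.
Proof. intros. destruct (x_all tau m). destruct (win_x tau m H0 H1) as [H2 _]. auto. Qed.
Lemma sx_wr m t : tn (S m) <= t <= tplus (S m) -> s_x tau t = coef tau (S m) * (Lb m / 5)^3/(8*PI) - coef tau (S m) * Gb (tn (S m)) (tplus (S m)) t.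
Proof. intros. destruct (x_all tau m). destruct (win_x tau m H0 H1) as [_ [H2 _]]. auto. Qed.
Lemma sx_gap m t : tplus (S m) <= t <= tminus (S (S m)) -> s_x tau t = 0.
Proof. intros. destruct (x_all tau m). destruct (win_x tau m H0 H1) as [_ [_ [H2 _]]]. auto. Qed.

Lemma BP m : tn (S m) - tminus (S m) = Lb m / 5.
Proof. rewrite tminus_S. unfold Lb. field. Qed.
Lemma QB m : tplus (S m) - tn (S m) = Lb m / 5.
Proof. rewrite tplus_S. field. Qed.

Lemma sx_pos m t : 0 < coef tau (S m) -> tminus (S m) < t < tplus (S m) -> 0 < s_x tau t.
Proof. intros Hc Ht. generalize (win_lt m); intros.
  destruct (Rle_lt_dec t (tn (S m))).
  - rewrite (sx_wl m) by lra. apply Rmult_lt_0_compat; auto.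
    rewrite <- (Gb_a (tminus (S m)) (tn (S m))) by lra. apply Gb_incr; lra.
  - rewrite (sx_wr m) by lra. generalize (Gb_incr (tn (S m)) (tplus (S m)) t (tplus (S m)) ltac:(lra) ltac:(lra)).
    rewrite Gb_b by lra. rewrite QB. intros. unfold Rdiv in *. nra. Qed.

Lemma sx_incr m t t' : 0 < coef tau (S m) -> tminus (S m) <= t -> t < t' -> t' <= tn (S m) -> s_x tau t < s_x tau t'.
Proof. intros. generalize (win_lt m); intros. rewrite !(sx_wl m) by lra.
  apply Rmult_lt_compat_l; auto. apply Gb_incr; lra. Qed.
Lemma sx_decr m t t' : 0 < coef tau (S m) -> tn (S m) <= t -> t < t' -> t' <= tplus (S m) -> s_x tau t' < s_x tau t.
Proof. intros. generalize (win_lt m); intros. rewrite !(sx_wr m) by lra.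
  generalize (Gb_incr (tn (S m)) (tplus (S m)) t t' ltac:(lra) ltac:(lra)); intros. nra. Qed.

Lemma win_of t : tminus 1 <= t < 1 -> exists a, tminus (S a) <= t < tminus (S (S a)).
Proof. intros Ht.
  destruct (E_small ((1 - t) / (1/5 + 4/(5*exp 1)))) as [n Hn].
  apply Rdiv_lt_0_compat. lra. apply coefs_pos.
  assert (t < tminus (S n)).
  { rewrite tminus_E. generalize e_bounds coefs_pos; intros ? [H1 _].
    apply Rmult_lt_compat_r with (r := 1/5 + 4/(5*exp 1)) in Hn; auto.
    replace ((1 - t) / (1 / 5 + 4 / (5 * exp 1)) * (1 / 5 + 4 / (5 * exp 1))) with (1 - t) in Hn by (field; lra). lra. }
  clear Hn. induction n. lra.
  destruct (Rlt_le_dec t (tminus (S n))). apply IHn; auto. exists n; lra. Qed.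

Lemma X_claim t : 0 <= t <= 1 -> s_x tau t = 0 \/ exists m, 0 < coef tau (S m) /\ tminus (S m) < t < tplus (S m).
Proof. intros Ht. destruct (Req_dec t 1). subst; left; apply sx_1.
  destruct (Rlt_le_dec t (tminus 1)).
  - left. destruct (x_init tau) as [H1 _]. apply H1. lra.
  - destruct (win_of t) as [a Ha]. lra. generalize (win_lt a) (ineq_win a); intros.
    destruct (Rle_lt_dec (tplus (S a)) t). left. apply (sx_gap a); lra.
    destruct (coef_bounds tau (S a)) as [Hc _]. destruct (Req_dec (coef tau (S a)) 0) as [Hc0|Hc0].
    + left. destruct (Rle_lt_dec t (tn (S a))).
      rewrite (sx_wl a) by lra. rewrite Hc0. apply Rmult_0_l. rewrite (sx_wr a) by lra. rewrite Hc0. unfold Rdiv. rewrite !Rmult_0_l. apply Rminus_diag_eq. reflexivity.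
    + destruct (Req_dec t (tminus (S a))).
      * left. subst. apply (x_all tau a).
      * right. exists a. split. lra. lra. Qed.
End WX.

Section Inj.
Variable tau : nat -> option nat.

Definition InD t := t = 1 \/ exists m, tn m <= t < tn (S m) /\ (coef tau (S m) = 0 -> t < D0 m).
Definition PPset t := t = 1 \/ exists m, tn m <= t < D0 m.

Lemma InD_range t : InD t -> 0 <= t <= 1.
Proof. intros [H|[m [Hm _]]]. lra. generalize (tn_ge0 m) (tn_lt1 (S m)); lra. Qed.

Lemma L_x0 t : InD t -> s_x tau t = 0 -> PPset t.
Proof. intros [H|[m [Hm Hc]]] Hx. left; auto. right. exists m. split. lra.
  destruct (Rlt_le_dec t (D0 m)); auto. exfalso.
  destruct (coef_bounds tau (S m)) as [Hc1 _].
  destruct (Req_dec (coef tau (S m)) 0). specialize (Hc H). lra.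
  generalize (WP m) (WQ m); intros.
  assert (0 < s_x tau t). { apply (sx_pos tau m). lra. lra. }
  lra. Qed.

Lemma block_le m k t t' : tn m <= t -> t' < tn (S k) -> t < t' -> (m <= k)%nat.
Proof. intros. destruct (Nat.le_gt_cases m k); auto.
  generalize (tn_mono (S k) m ltac:(lia)); lra. Qed.

Lemma L_PP t t' : PPset t -> PPset t' -> t < t' -> s_y t < s_y t'.
Proof. intros [H|[m Hm]] [H'|[k Hk]] Htt.
  - lra.
  - generalize (D0_bounds k) (tn_lt1 (S k)); lra.
  - subst t'. rewrite sy_1. generalize (sy_phi_le m t ltac:(lra)) (Yb_lt_T (S m)); lra.
  - generalize (D0_bounds m) (D0_bounds k); intros.
    assert (m <= k)%nat by (apply (block_le m k t t'); lra).
    destruct (Nat.eq_dec m k).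
    + subst k. apply (sy_phi_incr m); lra.
    + generalize (sy_phi_lt m t ltac:(lra)) (Yb_mono (S m) k ltac:(lia)) (sy_phi_ge k t' ltac:(lra)). lra.
Qed.

Lemma win_unique_y m k t t' : tminus (S m) < t < tplus (S m) -> tminus (S k) < t' < tplus (S k) -> (m < k)%nat -> s_y t < s_y t'.
Proof. intros. generalize (Wy_up m t ltac:(lra)) (tplus_mono_y (S m) k ltac:(lia)) (Wy_low k t' ltac:(lra)). lra. Qed.

Lemma inj_s t t' : InD t -> InD t' -> s_x tau t = s_x tau t' -> s_y t = s_y t' -> t = t'.
Proof.
  intros Ht Ht' Hx Hy.
  destruct (X_claim tau t (InD_range t Ht)) as [H0|[m [Hc Hw]]].
  - assert (PPset t) by (apply L_x0; auto). assert (PPset t') by (apply L_x0; auto; lra).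
    destruct (Rtotal_order t t') as [Hl|[He|Hg]]; auto.
    generalize (L_PP t t' H H1 Hl); lra. generalize (L_PP t' t H1 H Hg); lra.
  - destruct (X_claim tau t' (InD_range t' Ht')) as [H0|[k [Hc' Hw']]].
    + exfalso. generalize (sx_pos tau m t Hc Hw). lra.
    + destruct (Compare_dec.lt_eq_lt_dec m k) as [[Hlt|Heq]|Hgt].
      * generalize (win_unique_y m k t t' Hw Hw' Hlt). lra.
      * subst k. generalize (win_lt m); intros.
        destruct (Rtotal_order t t') as [Hl|[He|Hg]]; auto; exfalso.
        -- destruct (Rle_lt_dec t' (tn (S m))).
           ++ generalize (sx_incr tau m t t' Hc ltac:(lra) Hl ltac:(lra)). lra.
           ++ destruct (Rle_lt_dec (tn (S m)) t).
              ** generalize (sx_decr tau m t t' Hc ltac:(lra) Hl ltac:(lra)). lra.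
              ** generalize (Wy_left m t ltac:(lra)) (Wy_right m t' ltac:(lra)). lra.
        -- destruct (Rle_lt_dec t (tn (S m))).
           ++ generalize (sx_incr tau m t' t Hc ltac:(lra) Hg ltac:(lra)). lra.
           ++ destruct (Rle_lt_dec (tn (S m)) t').
              ** generalize (sx_decr tau m t' t Hc ltac:(lra) Hg ltac:(lra)). lra.
              ** generalize (Wy_left m t' ltac:(lra)) (Wy_right m t ltac:(lra)). lra.
      * generalize (win_unique_y k m t' t Hw' Hw Hgt). lra.
Qed.
End Inj.


Section Theta.
Variable tau : nat -> option nat.

Definition thm m u := if Rlt_dec 0 (coef tau (S m)) then u else tn m + 5/6 * (u - tn m).
Definition theta u := match excluded_middle_informative (exists m, tn m <= u < tn (S m)) with
  | left H => thm (proj1_sig (constructive_indefinite_description _ H)) u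
  | right _ => u end.

Lemma block_unique m k u : tn m <= u < tn (S m) -> tn k <= u < tn (S k) -> m = k.
Proof. intros. destruct (Compare_dec.lt_eq_lt_dec m k) as [[Hlt|Heq]|Hgt]; auto.
  generalize (tn_mono (S m) k ltac:(lia)); lra. generalize (tn_mono (S k) m ltac:(lia)); lra. Qed.

Lemma theta_eq m u : tn m <= u < tn (S m) -> theta u = thm m u.
Proof. intros Hu. unfold theta. dem H.
  - destruct (constructive_indefinite_description _ H) as [k Hk]. simpl.
    rewrite (block_unique k m u); auto.
  - exfalso; apply H; exists m; auto. Qed.

Lemma theta_1 : theta 1 = 1.
Proof. unfold theta. dem H; auto. exfalso. destruct H as [m Hm]. generalize (tn_lt1 (S m)); lra. Qed.

Lemma thm_start m : thm m (tn m) = tn m.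
Proof. unfold thm. destruct Rlt_dec; ring. Qed.

Lemma theta_tn m : theta (tn m) = tn m.
Proof. rewrite (theta_eq m). apply thm_start. generalize (tn_smono m (S m) ltac:(lia)); lra. Qed.

Lemma thm_range m u : tn m <= u < tn (S m) -> tn m <= thm m u < tn (S m) /\ (coef tau (S m) = 0 -> thm m u < D0 m).
Proof. intros Hu. unfold thm. generalize (D0_bounds m); intros. unfold D0 in *. assert (tn (S m) - tn m = Lb m) by reflexivity.
  destruct Rlt_dec.
  - split. lra. intros. lra.
  - split. lra. intros. lra. Qed.

Lemma theta_InD u : 0 <= u <= 1 -> InD tau (theta u).
Proof. intros Hu. destruct (Req_dec u 1). subst. left. apply theta_1.
  destruct (block_of u) as [m Hm]. lra. right. exists m. rewrite (theta_eq m) by auto.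
  apply thm_range; auto. Qed.

Lemma theta_range u : 0 <= u <= 1 -> 0 <= theta u <= 1.
Proof. intros. apply InD_range with tau. apply theta_InD; auto. Qed.

Lemma theta_inj u u' : 0 <= u <= 1 -> 0 <= u' <= 1 -> theta u = theta u' -> u = u'.
Proof.
  intros Hu Hu' He.
  assert (Hb : forall v, 0 <= v < 1 -> exists m, tn m <= v < tn (S m) /\ tn m <= theta v < tn (S m)).
  { intros v Hv. destruct (block_of v Hv) as [m Hm]. exists m. split; auto. rewrite (theta_eq m) by auto. apply thm_range; auto. }
  destruct (Req_dec u 1); destruct (Req_dec u' 1).
  - lra.
  - subst u. rewrite theta_1 in He. destruct (Hb u' ltac:(lra)) as [k [_ Hk]]. generalize (tn_lt1 (S k)); lra.
  - subst u'. rewrite theta_1 in He. destruct (Hb u ltac:(lra)) as [k [_ Hk]]. generalize (tn_lt1 (S k)); lra.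
  - destruct (Hb u ltac:(lra)) as [m [Hm1 Hm2]]. destruct (Hb u' ltac:(lra)) as [k [Hk1 Hk2]].
    rewrite He in Hm2. assert (m = k) by (apply (block_unique m k (theta u')); auto). subst k.
    rewrite (theta_eq m u), (theta_eq m u') in He by auto. unfold thm in He. destruct Rlt_dec; lra. Qed.

Lemma theta_near1 u : 0 <= u <= 1 -> Rabs (theta u - 1) <= 3 * Rabs (u - 1).
Proof. intros Hu. destruct (Req_dec u 1). subst. rewrite theta_1. rewrite Rminus_diag, Rabs_R0. lra.
  destruct (block_of u) as [m Hm]. lra. rewrite (theta_eq m) by auto.
  destruct (thm_range m u Hm) as [Hr _]. generalize (tn_lt1 (S m)); intro. rewrite !Rabs_left by lra.
  rewrite !tn_E in *. rewrite E_S in *. generalize e_bounds (E_pos m); intros.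
  assert (E m <= 3 * (E m / exp 1)). { apply Rmult_le_reg_r with (exp 1). lra.
    replace (3 * (E m / exp 1) * exp 1) with (3 * E m) by (field; lra). nra. }
  lra. Qed.

Lemma cont_thm (F : R -> R) (Fc : forall x, continuous F x) m x : continuous (fun u => F (thm m u)) x.
Proof. unfold thm. destruct Rlt_dec. apply Fc.
  apply (continuous_comp (fun u => tn m + 5/6 * (u - tn m)) F). 
  apply (ex_derive_continuous (fun u => tn m + 5/6 * (u - tn m))). auto_derive. auto. apply Fc. Qed.

Lemma PC_theta (F : R -> R) (Fc : forall x, continuous F x) :
  (forall m, F (thm m (tn (S m))) = F (tn (S m))) -> forall m, PC (fun u => F (theta u)) 0 (tn m).
Proof. intros Hend m. induction m. rewrite tn_0. apply PC_point.
  apply PC_trans with (tn m). split. apply tn_ge0. apply tn_mono; lia. auto.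
  apply PC_ext with (fun u => F (thm m u)). intros; apply cont_thm; auto.
  intros t Ht. destruct (Req_dec t (tn (S m))).
  - subst t. rewrite theta_tn. symmetry; apply Hend.
  - rewrite (theta_eq m t) by lra. auto. Qed.

Lemma end_x m : s_x tau (thm m (tn (S m))) = s_x tau (tn (S m)).
Proof. unfold thm. destruct Rlt_dec; auto.
  destruct (coef_bounds tau (S m)). assert (Hc : coef tau (S m) = 0) by lra.
  generalize (WP m) (D0_bounds m) (win_lt m); intros.
  assert (HD : tn m + 5/6 * (tn (S m) - tn m) = D0 m) by reflexivity. rewrite HD.
  rewrite !(sx_wl tau m) by lra. rewrite Hc. ring. Qed.

Lemma end_y m : s_y (thm m (tn (S m))) = s_y (tn (S m)).
Proof. unfold thm. destruct Rlt_dec; auto.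
  assert (tn m + 5/6 * (tn (S m) - tn m) = D0 m) by reflexivity. rewrite H.
  rewrite sy_D0. symmetry. apply yb_all. Qed.

Lemma within_F (F : R -> R) (Fc : forall x, continuous F x) :
  (forall m, F (thm m (tn (S m))) = F (tn (S m))) ->
  forall x, 0 <= x <= 1 -> forall eps, 0 < eps -> exists del, 0 < del /\
    forall t, 0 <= t <= 1 -> Rabs (t - x) < del -> Rabs (F (theta t) - F (theta x)) < eps.
Proof.
  intros Hend x Hx eps He.
  destruct (Req_dec x 1).
  - subst x. rewrite theta_1. destruct (cont_eps F 1 (Fc 1) eps He) as [d [Hd H1]].
    exists (d/3). split. lra. intros t Ht Htx. apply H1. generalize (theta_near1 t Ht). lra.
  - destruct (E_small (1 - x)) as [n Hn]. lra.
    assert (x < tn n) by (rewrite tn_E; lra).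
    generalize (PC_theta F Fc Hend n x ltac:(lra)). intros [HL HR].
    destruct (HR ltac:(lra) eps He) as [d2 [Hd2 K2]].
    destruct (Req_dec x 0).
    + exists d2. split; auto. intros t Ht Htx. apply K2. apply Rabs_def2 in Htx. lra.
    + destruct (HL ltac:(lra) eps He) as [d1 [Hd1 K1]].
      exists (Rmin d1 d2). split. apply Rmin_pos; auto. intros t Ht Htx.
      apply Rabs_def2 in Htx. generalize (Rmin_l d1 d2) (Rmin_r d1 d2); intros.
      destruct (Rle_lt_dec t x). apply K1; lra. apply K2; lra.
Qed.
End Theta.

Lemma within_pair (f1 f2 : R -> R) (D : R -> Prop) x :
  (forall eps, 0 < eps -> exists del, 0 < del /\ forall t, D t -> Rabs (t - x) < del -> Rabs (f1 t - f1 x) < eps) ->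
  (forall eps, 0 < eps -> exists del, 0 < del /\ forall t, D t -> Rabs (t - x) < del -> Rabs (f2 t - f2 x) < eps) ->
  filterlim (fun u => (f1 u, f2 u)) (within D (locally x)) (locally (f1 x, f2 x)).
Proof.
  intros H1 H2 P [eps HP]. unfold filtermap.
  destruct (H1 eps (cond_pos eps)) as [d1 [Hd1 K1]]. destruct (H2 eps (cond_pos eps)) as [d2 [Hd2 K2]].
  exists (mkposreal (Rmin d1 d2) (Rmin_pos _ _ Hd1 Hd2)). intros t Ht HD.
  apply HP. simpl in Ht. generalize (Rmin_l d1 d2) (Rmin_r d1 d2); intros.
  assert (Rabs (t - x) < Rmin d1 d2) by apply Ht.
  split. apply (K1 t HD). lra. apply (K2 t HD). lra.
Qed.

Section Fin.
Variable tau : nat -> option nat.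

Lemma sx_prevgap m x : tplus m <= x <= tminus (S m) -> s_x tau x = 0.
Proof. intros. destruct m as [|k].
  - destruct (x_init tau) as [H1 _]. apply H1. rewrite tplus_0 in H. lra.
  - apply (sx_gap tau k). auto. Qed.

Lemma surj t : 0 <= t <= 1 -> exists u, 0 <= u <= 1 /\ s_x tau (theta tau u) = s_x tau t /\ s_y (theta tau u) = s_y t.
Proof.
  intros Ht. destruct (Req_dec t 1). exists 1. subst. rewrite theta_1. split; auto; lra.
  destruct (block_of t) as [m Hm]. lra.
  generalize (D0_bounds m) (tn_lt1 (S m)) (tn_ge0 m) (WP m) (win_lt m) (ineq_prev m); intros.
  assert (HD : D0 m = tn m + 5/6 * (tn (S m) - tn m)) by reflexivity.
  destruct (coef_bounds tau (S m)) as [Hc _].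
  assert (Haff : ~ (0 < coef tau (S m)) -> forall x, tn m <= x < D0 m -> exists u, 0 <= u <= 1 /\ theta tau u = x).
  { intros Hn x Hx. exists (tn m + 6/5 * (x - tn m)). split. lra.
    rewrite (theta_eq tau m) by lra. unfold thm. destruct Rlt_dec. lra. field. }
  destruct (Rlt_dec 0 (coef tau (S m))).
  - exists t. split. lra. rewrite (theta_eq tau m) by lra. unfold thm. destruct Rlt_dec. auto. lra.
  - assert (Hc0 : coef tau (S m) = 0) by lra.
    destruct (Rlt_le_dec t (D0 m)).
    + destruct (Haff n t ltac:(lra)) as [u [Hu Hu']]. exists u. rewrite Hu'. auto.
    + assert (Hsx : s_x tau t = 0). { rewrite (sx_wl tau m) by lra. rewrite Hc0; ring. }
      generalize (sy_dip m t ltac:(lra)) (Y3 m) (sy_D0 m); intros.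
      destruct (IVT_gen_consistent s_y (tplus m) (D0 m) (s_y t) sy_cont) as [x [Hx Hxy]].
      rewrite Rmin_left, Rmax_right by lra. lra.
      rewrite Rmin_left, Rmax_right in Hx by lra.
      assert (Hxp : tplus m < x). { destruct (Req_dec x (tplus m)); [subst; lra|lra]. }
      assert (Hsx' : s_x tau x = 0).
      { destruct (Rle_lt_dec x (tminus (S m))). apply (sx_prevgap m); lra.
        rewrite (sx_wl tau m) by lra. rewrite Hc0; ring. }
      destruct (Req_dec x (D0 m)).
      * exists (tn (S m)). split. lra. rewrite (theta_tn tau (S m)). rewrite Hsx.
        rewrite (sx_wl tau m) by lra. rewrite Hc0. split. ring.
        rewrite (proj2 (yb_all (S m))). subst x. lra.
      * destruct (Haff n x ltac:(lra)) as [u [Hu Hu']]. exists u. rewrite Hu'. split; auto. split; lra.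
Qed.
End Fin.

Theorem corollary3p7 (tau : nat -> option nat) :
  s_vec tau 0 = (0, 0) /\
  s_vec tau 1 = (0, 5 ^ 3 * (exp 1 - 1) ^ 3 / (6 ^ 3 * 8 * PI * (exp 1 ^ 3 - 1))) /\
  simple_curve_from_to (Gamma tau) (s_vec tau 0) (s_vec tau 1).
Proof.
  assert (H0 : s_vec tau 0 = (0, 0)).
  { unfold s_vec, s_x, s_y. rewrite !RInt_point. reflexivity. }
  split; auto. split.
  { unfold s_vec. rewrite sx_1, sy_1. reflexivity. }
  exists 0, 1, (fun u => (s_x tau (theta tau u), s_y (theta tau u))).
  split. lra.
  split.
  { intros x Hx. apply (within_pair (fun u => s_x tau (theta tau u)) (fun u => s_y (theta tau u))).
    - apply within_F. apply sx_cont. apply end_x. auto.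
    - apply within_F. apply sy_cont. apply end_y. auto. }
  split.
  { intros x y Hx Hy He. injection He; intros Hy' Hx'.
    apply (theta_inj tau); auto. apply (inj_s tau); auto; apply theta_InD; auto. }
  split.
  { intros z. split.
    - intros [t [Ht Hz]]. destruct (surj tau t Ht) as [u [Hu [H1 H2]]]. exists u. split; auto.
      rewrite <- Hz. unfold s_vec. rewrite H1, H2. reflexivity.
    - intros [u [Hu Hz]]. exists (theta tau u). split. apply theta_range; auto. rewrite <- Hz. reflexivity. }
  split.
  - assert (theta tau 0 = 0) by (generalize (theta_tn tau 0); rewrite tn_0; auto). rewrite H. reflexivity.
  - rewrite theta_1. reflexivity.
Qed.
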